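(* Let $(q_n),(r_n)$ be complex sequences vanishing faster than any negative power of $|n|$ as $n\to\pm\infty$, with $1-q_nr_n\ne0$ and $1+q_nr_{n+1}\neq0$ for all $n\in\mathbb Z$. Let $T$ and $\bar T$ be the transmission coefficients (with their meromorphic extensions to $|z|<1$ and $|z|>1$, respectively) of the system $$\begin{bmatrix}\alpha_n\\ \beta_n\end{bmatrix}=\begin{bmatrix} z & (z-z^{-1})q_n\\ z\,r_n & z^{-1}+(z-z^{-1})q_nr_n\end{bmatrix}\begin{bmatrix}\alpha_{n+1}\\ \beta_{n+1}\end{bmatrix}.$$ Then $$T=\frac1{D_\infty}\big[1-z^2S_\infty+O(z^4)\big],\quad z\to0,\qquad \bar T=\frac1{E_\infty}\Big[1-\frac1{z^2}Q_\infty+O(z^{-4})\Big],\quad z\to\infty,$$ where $D_\infty=\prod_{j\in\mathbb Z}(1-q_jr_j)$, $E_\infty=\prod_{j\in\mathbb Z}(1+q_jr_{j+1})$, $$S_\infty=\sum_{k=-\infty}^{\infty}\frac{r_k(q_k-q_{k+1}-q_kq_{k+1}r_{k+1})}{(1-q_kr_k)(1-q_{k+1}r_{k+1})},\qquad Q_\infty=\sum_{k=-\infty}^{\infty}\frac{r_{k+2}(q_k-q_{k+1}-q_kq_{k+1}r_{k+1})}{(1+q_kr_{k+1})(1+q_{k+1}r_{k+2})}.$$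
   Context: For $|z|=1$ the Jost solution $\psi_n$ is the solution with $\psi_n=\begin{bmatrix}o(1)\\ z^n[1+o(1)]\end{bmatrix}$ as $n\to+\infty$, and $\bar\psi_n$ the solution with $\bar\psi_n=\begin{bmatrix}z^{-n}[1+o(1)]\\ o(1)\end{bmatrix}$ as $n\to+\infty$ (overbar is not complex conjugation). The transmission coefficients $T$, $\bar T$ are defined on $|z|=1$ by: the second component of $\psi_n$ equals $(1/T)z^n[1+o(1)]$ as $n\to-\infty$, and the first component of $\bar\psi_n$ equals $(1/\bar T)z^{-n}[1+o(1)]$ as $n\to-\infty$. (For this system the left and right transmission coefficients coincide.) *)

(* Defs.v *)
From Stdlib Require Import Reals ZArith Lia Lra.
From Coquelicot Require Import Coquelicot.
Open Scope R_scope.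
Open Scope C_scope.

Definition zpow (z : C) (n : Z) : C :=
  match n with
  | Z0 => 1
  | Zpos p => Cpow z (Pos.to_nat p)
  | Zneg p => / Cpow z (Pos.to_nat p)
  end.

Definition rapidly_decreasing (u : Z -> C) : Prop :=
  forall (k : nat) (eps : R), (0 < eps)%R ->
    exists N : Z, forall n : Z, (N <= Z.abs n)%Z ->
      (pow (IZR (Z.abs n)) k * Cmod (u n) < eps)%R.

Definition cv_pinf (u : Z -> C) (l : C) : Prop :=
  forall eps : R, (0 < eps)%R -> exists N : Z, forall n : Z, (N <= n)%Z ->
    (Cmod (u n - l) < eps)%R.
Definition cv_minf (u : Z -> C) (l : C) : Prop :=
  forall eps : R, (0 < eps)%R -> exists N : Z, forall n : Z, (n <= N)%Z ->
    (Cmod (u n - l) < eps)%R.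

Definition cv_nat (u : nat -> C) (l : C) : Prop :=
  forall eps : R, (0 < eps)%R -> exists N : nat, forall n : nat, (N <= n)%nat ->
    (Cmod (u n - l) < eps)%R.

Fixpoint sumZ (f : Z -> C) (a : Z) (len : nat) : C :=
  match len with
  | O => 0
  | S l => f a + sumZ f (a + 1)%Z l
  end.
Fixpoint prodZ (f : Z -> C) (a : Z) (len : nat) : C :=
  match len with
  | O => 1
  | S l => f a * prodZ f (a + 1)%Z l
  end.

Definition psumZ (f : Z -> C) (N : nat) : C := sumZ f (- Z.of_nat N)%Z (2 * N + 1).
Definition pprodZ (f : Z -> C) (N : nat) : C := prodZ f (- Z.of_nat N)%Z (2 * N + 1).

Definition sumZ_is (f : Z -> C) (s : C) : Prop := cv_nat (psumZ f) s.
Definition prodZ_is (f : Z -> C) (p : C) : Prop := cv_nat (pprodZ f) p.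

Definition solves (q r : Z -> C) (z : C) (alpha beta : Z -> C) : Prop :=
  forall n : Z,
    alpha n = z * alpha (n + 1)%Z + (z - / z) * q n * beta (n + 1)%Z /\
    beta n = z * r n * alpha (n + 1)%Z + (/ z + (z - / z) * q n * r n) * beta (n + 1)%Z.

(** Jost solution psi: psi_n = [o(1) ; z^n (1 + o(1))] as n -> +oo,
    written in the normalised form z^{-n} psi_n -> [0; 1]
    (identical to the paper's condition for |z| = 1, and the natural
    definition of the analytic continuation to 0 < |z| < 1). *)
Definition jost (q r : Z -> C) (z : C) (alpha beta : Z -> C) : Prop :=
  solves q r z alpha beta /\
  cv_pinf (fun n => zpow z (- n) * alpha n) 0 /\
  cv_pinf (fun n => zpow z (- n) * beta n) 1.

(** Jost solution psibar: psibar_n = [z^{-n} (1 + o(1)); o(1)] as n -> +oo,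
    written as z^n psibar_n -> [1; 0]. *)
Definition jostbar (q r : Z -> C) (z : C) (alpha beta : Z -> C) : Prop :=
  solves q r z alpha beta /\
  cv_pinf (fun n => zpow z n * alpha n) 1 /\
  cv_pinf (fun n => zpow z n * beta n) 0.

(** t is the transmission coefficient T at z:
    second component of psi_n = (1/T) z^n (1 + o(1)) as n -> -oo. *)
Definition transT (q r : Z -> C) (z t : C) : Prop :=
  t <> 0 /\ exists alpha beta : Z -> C, jost q r z alpha beta /\
    cv_minf (fun n => zpow z (- n) * beta n) (/ t).

(** t is the transmission coefficient Tbar at z:
    first component of psibar_n = (1/Tbar) z^{-n} (1 + o(1)) as n -> -oo. *)
Definition transTbar (q r : Z -> C) (z t : C) : Prop :=
  t <> 0 /\ exists alpha beta : Z -> C, jostbar q r z alpha beta /\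
    cv_minf (fun n => zpow z n * alpha n) (/ t).

(* Main.v *)
Require Import Defs.
From Stdlib Require Import Reals ZArith Lia Lra IndefiniteDescription.
From Coquelicot Require Import Coquelicot.
Open Scope R_scope.
Open Scope C_scope.

Lemma Cmod_le_ReIm (c : C) : (Cmod c <= Rabs (Re c) + Rabs (Im c))%R.
Proof.
  destruct c as [x y]. simpl.
  replace (x, y) with ((RtoC x) + (0, y)) by (unfold RtoC; apply injective_projections; simpl; ring).
  eapply Rle_trans; [apply Cmod_triangle|].
  rewrite Cmod_R. apply Rplus_le_compat_l. unfold Cmod; simpl.
  replace ((0 * (0 * 1) + y * (y * 1)))%R with (Rabs y ^ 2)%R.
  - rewrite sqrt_pow2; [lra| apply Rabs_pos].
  - rewrite pow2_abs. simpl. ring.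
Qed.

Lemma im_le_Cmod' (c : C) : (Rabs (Im c) <= Cmod c)%R.
Proof.
  destruct c as [x y]. unfold Cmod; simpl.
  rewrite <- (sqrt_pow2 (Rabs y)) by apply Rabs_pos.
  apply sqrt_le_1_alt. rewrite pow2_abs. simpl.
  assert (0 <= x*x)%R by nra. nra.
Qed.

Lemma Cmod_sub_sym (a b : C) : Cmod (a - b) = Cmod (b - a).
Proof. replace (a - b) with (- (b - a)) by ring. apply Cmod_opp. Qed.

Lemma Cmod_tri3 (a b c : C) : (Cmod (a - c) <= Cmod (a - b) + Cmod (b - c))%R.
Proof. replace (a - c) with ((a - b) + (b - c)) by ring. apply Cmod_triangle. Qed.

Lemma Cmod_sum2 (x a y b : C) :
  (Cmod (x * a + y * b) <= Cmod x * Cmod a + Cmod y * Cmod b)%R.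
Proof. eapply Rle_trans; [apply Cmod_triangle|]. rewrite !Cmod_mult. lra. Qed.

Lemma le_eps_le (a b : R) : (forall e, 0 < e -> a <= b + e)%R -> (a <= b)%R.
Proof.
  intros H. destruct (Rle_or_lt a b) as [h|h]; auto.
  specialize (H ((a - b)/2)%R ltac:(lra)). lra.
Qed.

Lemma C_complete_rate (u : nat -> C) (K : R) (phi : nat -> R) :
  (0 <= K)%R -> (forall j, 0 <= phi j)%R ->
  (forall j J, (j <= J)%nat -> Cmod (u J - u j) <= K * (phi j - phi J))%R ->
  (forall e, 0 < e -> exists N, forall j, (N <= j)%nat -> phi j < e)%R ->
  exists L, forall j, (Cmod (u j - L) <= K * phi j)%R.
Proof.
  intros HK Hphi Hu Hlim.
  assert (Hc : forall e, (0 < e)%R -> exists N, forall n m, (N <= n)%nat -> (N <= m)%nat ->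
             (Cmod (u n - u m) < e)%R).
  { intros e he. destruct (Hlim (e / (K + 1))%R) as [N HN].
    { apply Rdiv_lt_0_compat; lra. }
    exists N. intros n m hn hm.
    assert (Hb : forall a b, (N <= a)%nat -> (a <= b)%nat -> (Cmod (u b - u a) < e)%R).
    { intros a b ha hab. eapply Rle_lt_trans; [apply Hu; auto|].
      specialize (HN a ha). pose proof (Hphi b) as Hpb. pose proof Hphi as Hphi0.
      assert (K * (phi a - phi b) <= K * phi a)%R by (apply Rmult_le_compat_l; lra).
      assert (K * phi a <= (K+1) * phi a)%R by (pose proof (Hphi0 a); nra).
      assert ((K+1) * phi a < e)%R.
      { apply (Rmult_lt_compat_l (K+1)) in HN; [|lra].
        replace ((K + 1) * (e / (K + 1)))%R with e in HN by (field; lra). lra. }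
      lra. }
    destruct (Nat.le_ge_cases n m).
    - rewrite Cmod_sub_sym. apply Hb; auto.
    - apply Hb; auto. }
  assert (Hre : Cauchy_crit (fun n => Re (u n))).
  { intros e he. destruct (Hc e he) as [N HN]. exists N. intros n m hn hm.
    unfold Rdist. eapply Rle_lt_trans; [|apply (HN n m hn hm)].
    eapply Rle_trans; [|apply re_le_Cmod]. right. f_equal; destruct (u n), (u m); simpl; ring. }
  assert (Him : Cauchy_crit (fun n => Im (u n))).
  { intros e he. destruct (Hc e he) as [N HN]. exists N. intros n m hn hm.
    unfold Rdist. eapply Rle_lt_trans; [|apply (HN n m hn hm)].
    eapply Rle_trans; [|apply im_le_Cmod']. right. f_equal; destruct (u n), (u m); simpl; ring. }
  destruct (Rcomplete.R_complete _ Hre) as [l1 Hl1].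
  destruct (Rcomplete.R_complete _ Him) as [l2 Hl2].
  exists (l1, l2). intros j. apply le_eps_le. intros e he.
  destruct (Hl1 (e/2)%R ltac:(lra)) as [N1 HN1].
  destruct (Hl2 (e/2)%R ltac:(lra)) as [N2 HN2].
  set (J := (j + N1 + N2)%nat).
  eapply Rle_trans; [apply (Cmod_tri3 _ (u J))|].
  assert (Cmod (u j - u J) <= K * phi j)%R.
  { rewrite Cmod_sub_sym. eapply Rle_trans; [apply Hu; unfold J; lia|].
    specialize (Hphi J). nra. }
  assert (Cmod (u J - (l1, l2)) <= e)%R.
  { eapply Rle_trans; [apply Cmod_le_ReIm|].
    specialize (HN1 J ltac:(unfold J; lia)). specialize (HN2 J ltac:(unfold J; lia)).
    unfold Rdist in *. revert HN1 HN2. destruct (u J) as [a b]. simpl. unfold Rminus. lra. }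
  lra.
Qed.

Lemma cv_nat_unique (u : nat -> C) (a b : C) : cv_nat u a -> cv_nat u b -> a = b.
Proof.
  intros Ha Hb. apply Cminus_eq_0 || idtac.
  assert (Cmod (a - b) = 0)%R.
  { apply Rle_antisym; [|apply Cmod_ge_0]. apply le_eps_le. intros e he.
    destruct (Ha (e/2)%R ltac:(lra)) as [N1 H1]. destruct (Hb (e/2)%R ltac:(lra)) as [N2 H2].
    specialize (H1 (N1+N2)%nat ltac:(lia)). specialize (H2 (N1+N2)%nat ltac:(lia)).
    eapply Rle_trans; [apply (Cmod_tri3 _ (u (N1+N2)%nat))|]. rewrite Cmod_sub_sym. lra. }
  apply Cmod_eq_0 in H. replace a with ((a - b) + b) by ring. rewrite H. ring.
Qed.

Lemma cv_nat_lin (u v : nat -> C) (a b c : C) :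
  cv_nat u a -> cv_nat v b -> cv_nat (fun n => u n + c * v n) (a + c * b).
Proof.
  intros Hu Hv e he.
  destruct (Hu (e/2)%R ltac:(lra)) as [N1 H1].
  destruct (Hv (e / 2 / (Cmod c + 1))%R) as [N2 H2].
  { apply Rdiv_lt_0_compat; [lra|]. pose proof (Cmod_ge_0 c); lra. }
  exists (N1 + N2)%nat. intros n hn.
  replace (u n + c * v n - (a + c * b)) with ((u n - a) + c * (v n - b)) by ring.
  eapply Rle_lt_trans; [apply Cmod_triangle|]. rewrite Cmod_mult.
  specialize (H1 n ltac:(lia)). specialize (H2 n ltac:(lia)).
  pose proof (Cmod_ge_0 c). pose proof (Cmod_ge_0 (v n - b)).
  assert (Cmod c * Cmod (v n - b) <= (Cmod c + 1) * Cmod (v n - b))%R by nra.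
  assert ((Cmod c + 1) * Cmod (v n - b) < e/2)%R.
  { apply (Rmult_lt_compat_l (Cmod c + 1)) in H2; [|lra].
    replace ((Cmod c + 1) * (e / 2 / (Cmod c + 1)))%R with (e/2)%R in H2 by (field; lra). lra. }
  lra.
Qed.

Lemma cv_nat_ext (u v : nat -> C) (l : C) : (forall n, u n = v n) -> cv_nat u l -> cv_nat v l.
Proof. intros H Hu e he. destruct (Hu e he) as [N HN]. exists N. intros n hn. rewrite <- H. auto. Qed.

Lemma cv_nat_const (c : C) : cv_nat (fun _ => c) c.
Proof. intros e he. exists 0%nat. intros. replace (c - c) with (RtoC 0) by ring. rewrite Cmod_0. auto. Qed.

Lemma cv_nat_sub (u v : nat -> C) (a b : C) :
  cv_nat u a -> cv_nat v b -> cv_nat (fun n => u n - v n) (a - b).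
Proof.
  intros Hu Hv. pose proof (cv_nat_lin u v a b (-1) Hu Hv) as H.
  replace (a - b) with (a + (-1) * b) by ring. eapply cv_nat_ext; [|apply H]. intros; simpl; ring.
Qed.

Lemma cv_nat_scal (u : nat -> C) (a c : C) : cv_nat u a -> cv_nat (fun n => c * u n) (c * a).
Proof.
  intros Hu. pose proof (cv_nat_lin (fun _ => 0) u 0 a c (cv_nat_const 0) Hu) as H.
  replace (c * a) with (0 + c * a) by ring. eapply cv_nat_ext; [|apply H]. intros; simpl; ring.
Qed.

Lemma cv_nat_bounded (u : nat -> C) (a : C) : cv_nat u a ->
  exists N, forall n, (N <= n)%nat -> (Cmod (u n) <= Cmod a + 1)%R.
Proof.
  intros Hu. destruct (Hu 1%R ltac:(lra)) as [N HN]. exists N. intros n hn.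
  specialize (HN n hn). replace (u n) with ((u n - a) + a) by ring.
  eapply Rle_trans; [apply Cmod_triangle|]. lra.
Qed.

Lemma cv_nat_mult (u v : nat -> C) (a b : C) :
  cv_nat u a -> cv_nat v b -> cv_nat (fun n => u n * v n) (a * b).
Proof.
  intros Hu Hv.
  assert (H0 : cv_nat (fun n => (u n - a) * v n) 0).
  { intros e he. destruct (cv_nat_bounded v b Hv) as [N0 H0].
    set (B := (Cmod b + 1)%R). assert (0 < B)%R by (unfold B; pose proof (Cmod_ge_0 b); lra).
    destruct (Hu (e / B)%R ltac:(apply Rdiv_lt_0_compat; lra)) as [N1 H1].
    exists (N0 + N1)%nat. intros n hn. replace ((u n - a) * v n - 0) with ((u n - a) * v n) by ring.
    rewrite Cmod_mult. specialize (H0 n ltac:(lia)). specialize (H1 n ltac:(lia)).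
    pose proof (Cmod_ge_0 (u n - a)). pose proof (Cmod_ge_0 (v n)).
    assert (Cmod (u n - a) * Cmod (v n) <= Cmod (u n - a) * B)%R by (apply Rmult_le_compat_l; auto).
    assert (Cmod (u n - a) * B < e)%R.
    { apply (Rmult_lt_compat_r B) in H1; auto. replace (e / B * B)%R with e in H1 by (field; lra). lra. }
    lra. }
  pose proof (cv_nat_lin _ _ 0 b a H0 Hv) as H.
  replace (a * b) with (0 + a * b) by ring. eapply cv_nat_ext; [|apply H]. intros; simpl; ring.
Qed.

Lemma cv_nat_inv (v : nat -> C) (b : C) : b <> 0 -> cv_nat v b -> cv_nat (fun n => / v n) (/ b).
Proof.
  intros hb Hv e he.
  assert (hB : (0 < Cmod b)%R) by (apply Cmod_gt_0; auto).
  destruct (Hv (Cmod b / 2)%R ltac:(lra)) as [N0 H0].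
  destruct (Hv (e * (Cmod b * Cmod b) / 2)%R) as [N1 H1].
  { apply Rdiv_lt_0_compat; [|lra]. apply Rmult_lt_0_compat; [lra|nra]. }
  exists (N0 + N1)%nat. intros n hn. specialize (H0 n ltac:(lia)). specialize (H1 n ltac:(lia)).
  assert (hvn : (Cmod b / 2 <= Cmod (v n))%R).
  { pose proof (Cmod_tri3 b (v n) 0). replace (b - 0) with b in H by ring.
    replace (v n - 0) with (v n) in H by ring. rewrite Cmod_sub_sym in H. lra. }
  assert (vn0 : v n <> 0).
  { intros E. rewrite E, Cmod_0 in hvn. lra. }
  replace (/ v n - / b) with ((b - v n) / (v n * b)) by (field; auto).
  rewrite Cmod_div by (apply Cmult_neq_0; auto). rewrite Cmod_mult, Cmod_sub_sym.
  apply (Rmult_lt_reg_r (Cmod (v n) * Cmod b)). { apply Rmult_lt_0_compat; lra. }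
  unfold Rdiv. rewrite Rmult_assoc, Rinv_l by (apply Rgt_not_eq; apply Rmult_lt_0_compat; lra).
  rewrite Rmult_1_r.
  assert (e * (Cmod b * Cmod b) / 2 <= e * (Cmod (v n) * Cmod b))%R.
  { unfold Rdiv. rewrite Rmult_assoc. apply Rmult_le_compat_l; [lra|]. nra. }
  lra.
Qed.

Lemma cv_nat_div (u v : nat -> C) (a b : C) : b <> 0 ->
  cv_nat u a -> cv_nat v b -> cv_nat (fun n => u n / v n) (a / b).
Proof. intros hb Hu Hv. apply (cv_nat_mult u (fun n => / v n)); auto. apply cv_nat_inv; auto. Qed.

Lemma cv_pinf_nat (u : Z -> C) (l : C) : cv_pinf u l -> cv_nat (fun N => u (Z.of_nat N + 1)%Z) l.
Proof.
  intros H e he. destruct (H e he) as [N HN]. exists (Z.to_nat N). intros n hn. apply HN. lia.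
Qed.

Lemma cv_minf_nat (u : Z -> C) (l : C) : cv_minf u l -> cv_nat (fun N => u (- Z.of_nat N)%Z) l.
Proof.
  intros H e he. destruct (H e he) as [N HN]. exists (Z.to_nat (- N)). intros n hn. apply HN. lia.
Qed.

Lemma cv_pinf_lin (u v : Z -> C) (a b c : C) :
  cv_pinf u a -> cv_pinf v b -> cv_pinf (fun n => u n + c * v n) (a + c * b).
Proof.
  intros Hu Hv e he.
  destruct (Hu (e/2)%R ltac:(lra)) as [N1 H1].
  destruct (Hv (e / 2 / (Cmod c + 1))%R) as [N2 H2].
  { apply Rdiv_lt_0_compat; [lra|]. pose proof (Cmod_ge_0 c); lra. }
  exists (Z.max N1 N2). intros n hn.
  replace (u n + c * v n - (a + c * b)) with ((u n - a) + c * (v n - b)) by ring.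
  eapply Rle_lt_trans; [apply Cmod_triangle|]. rewrite Cmod_mult.
  specialize (H1 n ltac:(lia)). specialize (H2 n ltac:(lia)).
  pose proof (Cmod_ge_0 c). pose proof (Cmod_ge_0 (v n - b)).
  assert (Cmod c * Cmod (v n - b) <= (Cmod c + 1) * Cmod (v n - b))%R by nra.
  assert ((Cmod c + 1) * Cmod (v n - b) < e/2)%R.
  { apply (Rmult_lt_compat_l (Cmod c + 1)) in H2; [|lra].
    replace ((Cmod c + 1) * (e / 2 / (Cmod c + 1)))%R with (e/2)%R in H2 by (field; lra). lra. }
  lra.
Qed.

Lemma cv_pinf_ext (u v : Z -> C) (l : C) : (forall n, u n = v n) -> cv_pinf u l -> cv_pinf v l.
Proof. intros H Hu e he. destruct (Hu e he) as [N HN]. exists N. intros n hn. rewrite <- H. auto. Qed.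

Lemma cv_minf_ext (u v : Z -> C) (l : C) : (forall n, u n = v n) -> cv_minf u l -> cv_minf v l.
Proof. intros H Hu e he. destruct (Hu e he) as [N HN]. exists N. intros n hn. rewrite <- H. auto. Qed.

Lemma cv_minf_unique (u : Z -> C) (a b : C) : cv_minf u a -> cv_minf u b -> a = b.
Proof. intros Ha Hb. eapply cv_nat_unique; apply cv_minf_nat; eauto. Qed.

Ltac pos := repeat match goal with
  | |- (0 <= ?a * ?b)%R => apply Rmult_le_pos
  | |- (0 <= ?a + ?b)%R => apply Rplus_le_le_0_compat
  end; try lra.

Definition Psi (n : Z) : R :=
  if (0 <=? n)%Z then (/ (IZR n + 1))%R else (3 - / (1 - IZR n))%R.
Definition mu (n : Z) : R := (Psi n - Psi (n + 1))%R.
Definition Phi (n : Z) : R := (Psi n + Psi (n + 1) + Psi (n + 2))%R.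
Definition nu (n : Z) : R := (Phi n - Phi (n + 1))%R.

Lemma Psi_bounds n : (0 <= Psi n <= 3)%R.
Proof.
  unfold Psi. destruct (Z.leb_spec 0 n) as [h|h].
  - apply IZR_le in h. split.
    + left. apply Rinv_0_lt_compat. lra.
    + assert (/ (IZR n + 1) <= 1)%R.
      { rewrite <- Rinv_1. apply Rinv_le_contravar; lra. }
      lra.
  - apply IZR_lt in h. assert (0 < / (1 - IZR n))%R by (apply Rinv_0_lt_compat; lra).
    assert (/ (1 - IZR n) <= 1)%R.
    { rewrite <- Rinv_1. apply Rinv_le_contravar; lra. }
    lra.
Qed.

Lemma mu_lower n : (/ (2 * (IZR (Z.abs n) + 1) ^ 2) <= mu n)%R.
Proof.
  unfold mu, Psi. rewrite plus_IZR.
  destruct (Z.leb_spec 0 n) as [h|h]; destruct (Z.leb_spec 0 (n+1)) as [h'|h']; try lia.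
  - rewrite Z.abs_eq by lia. apply IZR_le in h.
    replace (/ (IZR n + 1) - / (IZR n + IZR 1 + 1))%R with (/ ((IZR n + 1) * (IZR n + 2)))%R
      by (simpl; field; lra).
    apply Rinv_le_contravar. { apply Rmult_lt_0_compat; lra. } simpl. nra.
  - assert (n = -1)%Z by lia. subst. simpl.
    replace (/ (2 * (1 + 1) ^ 2))%R with (/8)%R by (simpl; field).
    replace (3 - / (1 - -1) - / (-1 + 1 + 1))%R with (3/2)%R by field. lra.
  - rewrite Z.abs_neq by lia. rewrite opp_IZR. assert (hn : (IZR n <= -2)%R) by (apply IZR_le; lia).
    simpl.
    replace (3 - / (1 - IZR n) - (3 - / (1 - (IZR n + 1))))%R with (/ ((- IZR n) * (1 - IZR n)))%R
      by (field; lra).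
    apply Rinv_le_contravar. { apply Rmult_lt_0_compat; lra. } nra.
Qed.

Lemma mu_pos n : (0 < mu n)%R.
Proof.
  eapply Rlt_le_trans; [|apply mu_lower]. apply Rinv_0_lt_compat.
  pose proof (IZR_le 0 (Z.abs n) ltac:(lia)). nra.
Qed.

Lemma mu_le3 n : (mu n <= 3)%R.
Proof. unfold mu. pose proof (Psi_bounds n). pose proof (Psi_bounds (n+1)). lra. Qed.

Lemma nu_eq n : nu n = (mu n + mu (n+1) + mu (n+2))%R.
Proof.
  unfold nu, Phi, mu. replace (n + 1 + 1)%Z with (n+2)%Z by lia.
  replace (n + 2 + 1)%Z with (n+1+2)%Z by lia. ring.
Qed.

Lemma mu_le_nu n : (mu n <= nu n)%R.
Proof. rewrite nu_eq. pose proof (mu_pos (n+1)). pose proof (mu_pos (n+2)). lra. Qed.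

Lemma nu_pos n : (0 <= nu n)%R.
Proof. pose proof (mu_le_nu n). pose proof (mu_pos n). lra. Qed.

Lemma Psi_mono_k n (k : nat) : (Psi (n + Z.of_nat k) <= Psi n)%R.
Proof.
  induction k.
  - simpl. rewrite Z.add_0_r. lra.
  - rewrite Nat2Z.inj_succ. replace (n + Z.succ (Z.of_nat k))%Z with (n + Z.of_nat k + 1)%Z by lia.
    pose proof (mu_pos (n + Z.of_nat k)). unfold mu in H. lra.
Qed.

Lemma Psi_mono m n : (m <= n)%Z -> (Psi n <= Psi m)%R.
Proof.
  intros h. replace n with (m + Z.of_nat (Z.to_nat (n - m)))%Z by lia. apply Psi_mono_k.
Qed.

Lemma Phi_bounds n : (0 <= Phi n <= 9)%R.
Proof. unfold Phi. pose proof (Psi_bounds n). pose proof (Psi_bounds (n+1)). pose proof (Psi_bounds (n+2)). lra. Qed.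

Lemma Phi_mono m n : (m <= n)%Z -> (Phi n <= Phi m)%R.
Proof.
  intros h. unfold Phi. pose proof (Psi_mono m n h). pose proof (Psi_mono (m+1) (n+1) ltac:(lia)).
  pose proof (Psi_mono (m+2) (n+2) ltac:(lia)). lra.
Qed.

Lemma Psi_lim_p (e : R) : (0 < e)%R -> exists N : Z, forall n, (N <= n)%Z -> (Psi n < e)%R.
Proof.
  intros he. destruct (archimed (/ e)) as [h1 _].
  exists (Z.max 0 (up (/ e))). intros n hn.
  unfold Psi. destruct (Z.leb_spec 0 n) as [h|h]; try lia.
  assert (IZR (up (/e)) <= IZR n)%R by (apply IZR_le; lia).
  assert (0 < / e)%R by (apply Rinv_0_lt_compat; auto).
  replace e with (/ / e)%R by (field; lra).
  apply Rinv_lt_contravar; [apply Rmult_lt_0_compat; try lra|lra].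
Qed.

Lemma Psi_lim_m (e : R) : (0 < e)%R -> exists N : Z, forall n, (n <= N)%Z -> (3 - e < Psi n)%R.
Proof.
  intros he. destruct (archimed (/ e)) as [h1 _].
  exists (Z.min (-1) (- up (/ e))). intros n hn.
  unfold Psi. destruct (Z.leb_spec 0 n) as [h|h]; try lia.
  assert (IZR (up (/e)) <= - IZR n)%R by (rewrite <- opp_IZR; apply IZR_le; lia).
  assert (0 < / e)%R by (apply Rinv_0_lt_compat; auto).
  assert (/ (1 - IZR n) < e)%R.
  { replace e with (/ / e)%R by (field; lra).
    apply Rinv_lt_contravar; [apply Rmult_lt_0_compat; try lra|lra]. }
  lra.
Qed.

Lemma Phi_lim_p (e : R) : (0 < e)%R -> exists N : Z, forall n, (N <= n)%Z -> (Phi n < e)%R.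
Proof.
  intros he. destruct (Psi_lim_p (e/3)%R ltac:(lra)) as [N HN]. exists N. intros n hn.
  unfold Phi. pose proof (HN n hn). pose proof (HN (n+1)%Z ltac:(lia)). pose proof (HN (n+2)%Z ltac:(lia)). lra.
Qed.

Lemma Phi_lim_m (e : R) : (0 < e)%R -> exists N : Z, forall n, (n <= N)%Z -> (9 - e < Phi n)%R.
Proof.
  intros he. destruct (Psi_lim_m (e/3)%R ltac:(lra)) as [N HN]. exists (N - 2)%Z. intros n hn.
  unfold Phi. pose proof (HN n ltac:(lia)). pose proof (HN (n+1)%Z ltac:(lia)). pose proof (HN (n+2)%Z ltac:(lia)). lra.
Qed.

Lemma gronwall (F : Z -> R) (ka S : R) :
  (0 <= ka)%R -> (0 <= S)%R -> (forall n, 0 <= F n)%R ->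
  (forall n, F n <= (1 + ka * mu n) * F (n+1)%Z + S * nu n)%R ->
  forall (k : nat) n, (F n <= exp (ka * (Psi n - Psi (n + Z.of_nat k))) *
                           (F (n + Z.of_nat k)%Z + S * (Phi n - Phi (n + Z.of_nat k))))%R.
Proof.
  intros hka hS hF Hrec k. induction k as [|k IH]; intros n.
  - simpl. rewrite Z.add_0_r. replace (ka * (Psi n - Psi n))%R with 0%R by ring.
    rewrite exp_0. lra.
  - rewrite Nat2Z.inj_succ. replace (n + Z.succ (Z.of_nat k))%Z with (n + 1 + Z.of_nat k)%Z by lia.
    specialize (IH (n+1)%Z). set (m := (n + 1 + Z.of_nat k)%Z) in *.
    pose proof (Hrec n) as Hn.
    assert (hm : (0 <= ka * mu n)%R) by (pose proof (mu_pos n); nra).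
    assert (h1 : (1 + ka * mu n <= exp (ka * mu n))%R) by apply exp_ineq1_le.
    assert (hPsi : (Psi m <= Psi (n+1))%R) by (apply Psi_mono; unfold m; lia).
    assert (hPhi : (Phi m <= Phi (n+1))%R) by (apply Phi_mono; unfold m; lia).
    set (E1 := exp (ka * (Psi (n + 1) - Psi m))) in *.
    assert (hE1 : (1 <= E1)%R).
    { unfold E1. rewrite <- exp_0. destruct (Req_dec (ka * (Psi (n + 1) - Psi m)) 0) as [e|e].
      - rewrite e. lra.
      - left. apply exp_increasing. nra. }
    assert (hEe : exp (ka * (Psi n - Psi m)) = (exp (ka * mu n) * E1)%R).
    { unfold E1. rewrite <- exp_plus. f_equal. unfold mu. ring. }
    rewrite hEe.
    assert (hFn1 : (0 <= F (n+1)%Z)%R) by apply hF.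
    assert (hFm : (0 <= F m)%R) by apply hF.
    assert (hnu : (0 <= nu n)%R) by apply nu_pos.
    assert (Phi n - Phi m = nu n + (Phi (n + 1) - Phi m))%R by (unfold nu; ring).
    rewrite H.
    assert (hexp : (0 < exp (ka * mu n))%R) by apply exp_pos.
    assert ((1 + ka * mu n) * F (n + 1)%Z <= exp (ka * mu n) * (E1 * (F m + S * (Phi (n + 1) - Phi m))))%R.
    { eapply Rle_trans. apply Rmult_le_compat_r; [auto|apply h1].
      apply Rmult_le_compat_l; lra. }
    assert (S * nu n <= exp (ka * mu n) * E1 * (S * nu n))%R.
    { assert (1 <= exp (ka * mu n))%R by (rewrite <- exp_0; destruct hm as [hm|hm];
        [left; apply exp_increasing; auto| rewrite <- hm; lra]).
      assert (0 <= S * nu n)%R by nra.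
      assert (1 <= exp (ka * mu n) * E1)%R by nra. nra. }
    nra.
Qed.

Lemma gronwall_lim (F : Z -> R) (ka S B : R) :
  (0 <= ka)%R -> (0 <= S)%R -> (forall n, 0 <= F n)%R ->
  (forall n, F n <= (1 + ka * mu n) * F (n+1)%Z + S * nu n)%R ->
  (forall eta, 0 < eta -> forall n, exists m, (n <= m)%Z /\ F m <= B + eta)%R ->
  forall n, (F n <= exp (3 * ka) * (B + 9 * S))%R.
Proof.
  intros hka hS hF Hrec Hlim n. apply le_eps_le. intros e he.
  destruct (Hlim (e / exp (3 * ka))%R ltac:(apply Rdiv_lt_0_compat; [lra|apply exp_pos]) n) as [m [hnm hm]].
  pose proof (gronwall F ka S hka hS hF Hrec (Z.to_nat (m - n)) n) as G.
  replace (n + Z.of_nat (Z.to_nat (m - n)))%Z with m in G by lia.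
  assert (hE : (exp (ka * (Psi n - Psi m)) <= exp (3 * ka))%R).
  { pose proof (Psi_bounds n); pose proof (Psi_bounds m).
    destruct (Req_dec (ka * (Psi n - Psi m)) (3 * ka)) as [h|h]; [rewrite h; lra|].
    left. apply exp_increasing. pose proof (Psi_mono n m hnm). nra. }
  assert (hP : (Phi n - Phi m <= 9)%R) by (pose proof (Phi_bounds n); pose proof (Phi_bounds m); lra).
  pose proof (hF m).
  assert (hx : (0 <= F m + S * (Phi n - Phi m))%R) by (pose proof (Phi_mono n m hnm); nra).
  eapply Rle_trans; [apply G|].
  eapply Rle_trans; [apply Rmult_le_compat_r; [apply hx|apply hE]|].
  assert (hE3 : (0 < exp (3 * ka))%R) by apply exp_pos.
  assert (F m + S * (Phi n - Phi m) <= (B + e / exp (3 * ka)) + 9 * S)%R by nra.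
  replace (exp (3 * ka) * (B + 9 * S) + e)%R with (exp (3 * ka) * ((B + e / exp (3 * ka)) + 9 * S))%R
    by (field; lra).
  apply Rmult_le_compat_l; lra.
Qed.

Lemma rate_pinf (g : Z -> C) (K : R) : (0 <= K)%R ->
  (forall m n, (m <= n)%Z -> Cmod (g n - g m) <= K * (Phi m - Phi n))%R ->
  exists L, cv_pinf g L /\ forall n, (Cmod (g n - L) <= K * Phi n)%R.
Proof.
  intros hK Hg.
  destruct (C_complete_rate (fun j => g (Z.of_nat j)) K (fun j => Phi (Z.of_nat j)) hK)
    as [L HL].
  - intros j. apply Phi_bounds.
  - intros j J hj. apply Hg. lia.
  - intros e he. destruct (Phi_lim_p e he) as [N HN]. exists (Z.to_nat N). intros j hj. apply HN. lia.
  - assert (Hb : forall n, (Cmod (g n - L) <= K * Phi n)%R).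
    { intros n. set (j := Z.to_nat (Z.max 0 n)).
      eapply Rle_trans; [apply (Cmod_tri3 _ (g (Z.of_nat j)))|].
      pose proof (Hg n (Z.of_nat j) ltac:(unfold j; lia)). rewrite Cmod_sub_sym in H.
      pose proof (HL j). nra. }
    exists L. split; auto. intros e he.
    destruct (Phi_lim_p (e / (K + 1))%R ltac:(apply Rdiv_lt_0_compat; lra)) as [N HN].
    exists N. intros n hn. eapply Rle_lt_trans; [apply Hb|].
    specialize (HN n hn). pose proof (Phi_bounds n).
    apply (Rmult_lt_compat_l (K+1)) in HN; [|lra].
    replace ((K + 1) * (e / (K + 1)))%R with e in HN by (field; lra). nra.
Qed.

Lemma rate_minf (g : Z -> C) (K : R) : (0 <= K)%R ->
  (forall m n, (m <= n)%Z -> Cmod (g n - g m) <= K * (Phi m - Phi n))%R ->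
  exists L, cv_minf g L /\ forall n, (Cmod (g n - L) <= K * (9 - Phi n))%R.
Proof.
  intros hK Hg.
  destruct (C_complete_rate (fun j => g (- Z.of_nat j)%Z) K (fun j => 9 - Phi (- Z.of_nat j))%R hK)
    as [L HL].
  - intros j. pose proof (Phi_bounds (- Z.of_nat j)). lra.
  - intros j J hj. rewrite Cmod_sub_sym. eapply Rle_trans; [apply Hg; lia|]. right; ring.
  - intros e he. destruct (Phi_lim_m e he) as [N HN]. exists (Z.to_nat (- N)). intros j hj.
    specialize (HN (- Z.of_nat j)%Z ltac:(lia)). lra.
  - assert (Hb : forall n, (Cmod (g n - L) <= K * (9 - Phi n))%R).
    { intros n. set (j := Z.to_nat (Z.max 0 (- n))).
      eapply Rle_trans; [apply (Cmod_tri3 _ (g (- Z.of_nat j)%Z))|].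
      pose proof (Hg (- Z.of_nat j)%Z n ltac:(unfold j; lia)).
      pose proof (HL j). nra. }
    exists L. split; auto. intros e he.
    destruct (Phi_lim_m (e / (K + 1))%R ltac:(apply Rdiv_lt_0_compat; lra)) as [N HN].
    exists N. intros n hn. eapply Rle_lt_trans; [apply Hb|].
    specialize (HN n hn). pose proof (Phi_bounds n).
    assert (9 - Phi n < e / (K+1))%R by lra.
    apply (Rmult_lt_compat_l (K+1)) in H0; [|lra].
    replace ((K + 1) * (e / (K + 1)))%R with e in H0 by (field; lra). nra.
Qed.

Definition nv (v : C * C) : R := Rmax (Cmod (fst v)) (Cmod (snd v)).
Definition vsub (u v : C * C) : C * C := (fst u - fst v, snd u - snd v).
Definition vadd (u v : C * C) : C * C := (fst u + fst v, snd u + snd v).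
Definition cvP (f : Z -> C * C) (l : C * C) : Prop :=
  cv_pinf (fun n => fst (f n)) (fst l) /\ cv_pinf (fun n => snd (f n)) (snd l).

Lemma nv_fst v : (Cmod (fst v) <= nv v)%R.
Proof. apply Rmax_l. Qed.
Lemma nv_snd v : (Cmod (snd v) <= nv v)%R.
Proof. apply Rmax_r. Qed.
Lemma nv_pos v : (0 <= nv v)%R.
Proof. pose proof (nv_fst v). pose proof (Cmod_ge_0 (fst v)). lra. Qed.
Lemma nv_le v B : (Cmod (fst v) <= B)%R -> (Cmod (snd v) <= B)%R -> (nv v <= B)%R.
Proof. intros. apply Rmax_lub; auto. Qed.
Lemma nv_add u v : (nv (vadd u v) <= nv u + nv v)%R.
Proof.
  apply nv_le; simpl; (eapply Rle_trans; [apply Cmod_triangle|]).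
  - pose proof (nv_fst u); pose proof (nv_fst v); lra.
  - pose proof (nv_snd u); pose proof (nv_snd v); lra.
Qed.
Lemma nv_eq0 u v : (nv (vsub u v) <= 0)%R -> u = v.
Proof.
  intros h. pose proof (nv_fst (vsub u v)). pose proof (nv_snd (vsub u v)).
  pose proof (Cmod_ge_0 (fst (vsub u v))). pose proof (Cmod_ge_0 (snd (vsub u v))).
  assert (h1 : Cmod (fst (vsub u v)) = 0%R) by lra. assert (h2 : Cmod (snd (vsub u v)) = 0%R) by lra.
  apply Cmod_eq_0 in h1. apply Cmod_eq_0 in h2. simpl in h1, h2.
  apply injective_projections.
  - replace (fst u) with ((fst u - fst v) + fst v) by ring. rewrite h1. ring.
  - replace (snd u) with ((snd u - snd v) + snd v) by ring. rewrite h2. ring.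
Qed.
Lemma nv_tri3 a b c : (nv (vsub a c) <= nv (vsub a b) + nv (vsub b c))%R.
Proof.
  apply nv_le; simpl.
  - eapply Rle_trans; [apply (Cmod_tri3 _ (fst b))|].
    pose proof (nv_fst (vsub a b)); pose proof (nv_fst (vsub b c)); simpl in *; lra.
  - eapply Rle_trans; [apply (Cmod_tri3 _ (snd b))|].
    pose proof (nv_snd (vsub a b)); pose proof (nv_snd (vsub b c)); simpl in *; lra.
Qed.
Lemma nv_sub_sym a b : nv (vsub a b) = nv (vsub b a).
Proof. unfold nv, vsub; simpl. rewrite (Cmod_sub_sym (fst a)), (Cmod_sub_sym (snd a)). auto. Qed.

Lemma Cmod_tri_sub (a b : C) : (Cmod a <= Cmod (a - b) + Cmod b)%R.
Proof. replace a with ((a - b) + b) at 1 by ring. apply Cmod_triangle. Qed.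

Lemma Cmod_aff (x a w b : C) (X A B : R) : (Cmod x <= X)%R -> (Cmod a <= A)%R ->
  (Cmod w <= 1)%R -> (Cmod b <= B)%R -> (Cmod (x + a + w * b) <= X + A + B)%R.
Proof.
  intros h1 h2 h3 h4. eapply Rle_trans; [apply Cmod_triangle|].
  eapply Rle_trans; [apply Rplus_le_compat; [apply Cmod_triangle|right; apply Cmod_mult]|].
  pose proof (Cmod_ge_0 w); pose proof (Cmod_ge_0 b). nra.
Qed.

Lemma choice_Z {A : Type} (P : Z -> A -> Prop) : (forall n, exists a, P n a) -> exists f, forall n, P n (f n).
Proof.
  intros H. exists (fun n => proj1_sig (constructive_indefinite_description _ (H n))).
  intros n. apply (proj2_sig (constructive_indefinite_description _ (H n))).
Qed.

Lemma tele (g : Z -> C) (K : R) : (0 <= K)%R -> (forall n, Cmod (g n - g (n+1)%Z) <= K * nu n)%R ->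
  forall m n, (m <= n)%Z -> (Cmod (g n - g m) <= K * (Phi m - Phi n))%R.
Proof.
  intros hK H m n hmn. replace n with (m + Z.of_nat (Z.to_nat (n - m)))%Z by lia.
  generalize (Z.to_nat (n - m)). intros k. induction k.
  - simpl. rewrite Z.add_0_r. replace (g m - g m) with (RtoC 0) by ring. rewrite Cmod_0. lra.
  - rewrite Nat2Z.inj_succ. set (p := (m + Z.of_nat k)%Z) in *.
    replace (m + Z.succ (Z.of_nat k))%Z with (p + 1)%Z by (unfold p; lia).
    eapply Rle_trans; [apply (Cmod_tri3 _ (g p))|]. rewrite Cmod_sub_sym.
    pose proof (H p). unfold nu in H0. lra.
Qed.

Section Sys.
Variables a11 a12 a21 a22 b11 b12 b21 b22 : Z -> C.
Variable C0 : R.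
Hypothesis HC0 : (0 <= C0)%R.
Hypothesis Ha11 : forall n, (Cmod (a11 n) <= C0 * mu n)%R.
Hypothesis Ha12 : forall n, (Cmod (a12 n) <= C0 * mu n)%R.
Hypothesis Ha21 : forall n, (Cmod (a21 n) <= C0 * mu n)%R.
Hypothesis Ha22 : forall n, (Cmod (a22 n - 1) <= C0 * mu n)%R.
Hypothesis Hb11 : forall n, (Cmod (b11 n - 1) <= C0 * mu n)%R.
Hypothesis Hb12 : forall n, (Cmod (b12 n) <= C0 * mu n)%R.
Hypothesis Hb21 : forall n, (Cmod (b21 n) <= C0 * mu n)%R.
Hypothesis Hb22 : forall n, (Cmod (b22 n) <= C0 * mu n)%R.

Definition Mw (w : C) (n : Z) (v : C * C) : C * C :=
  ((a11 n + w * b11 n) * fst v + (a12 n + w * b12 n) * snd v,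
   (a21 n + w * b21 n) * fst v + (a22 n + w * b22 n) * snd v).
Definition Bm (n : Z) (v : C * C) : C * C :=
  (b11 n * fst v + b12 n * snd v, b21 n * fst v + b22 n * snd v).
Definition solP (w : C) (s : Z -> C * C) (f : Z -> C * C) : Prop :=
  forall n, f n = vadd (Mw w n (f (n+1)%Z)) (s n).
Definition zero2 (n : Z) : C * C := (RtoC 0, RtoC 0).
Definition ka := (4 * C0)%R.
Definition E3 := exp (3 * ka).

Lemma ka_pos : (0 <= ka)%R.
Proof. unfold ka; lra. Qed.

Lemma coef11 w n : (Cmod w <= 1)%R -> (Cmod (a11 n + w * b11 n) <= 1 + 2 * C0 * mu n)%R.
Proof.
  intros hw. replace (a11 n + w * b11 n) with (w + a11 n + w * (b11 n - 1)) by ring.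
  eapply Rle_trans; [apply (Cmod_aff _ _ _ _ 1 (C0 * mu n) (C0 * mu n)); auto|lra].
Qed.
Lemma coef12 w n : (Cmod w <= 1)%R -> (Cmod (a12 n + w * b12 n) <= 2 * C0 * mu n)%R.
Proof.
  intros hw. replace (a12 n + w * b12 n) with (0 + a12 n + w * b12 n) by ring.
  eapply Rle_trans; [apply (Cmod_aff _ _ _ _ 0 (C0 * mu n) (C0 * mu n)); auto|lra].
  rewrite Cmod_0; lra.
Qed.
Lemma coef21 w n : (Cmod w <= 1)%R -> (Cmod (a21 n + w * b21 n) <= 2 * C0 * mu n)%R.
Proof.
  intros hw. replace (a21 n + w * b21 n) with (0 + a21 n + w * b21 n) by ring.
  eapply Rle_trans; [apply (Cmod_aff _ _ _ _ 0 (C0 * mu n) (C0 * mu n)); auto|lra].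
  rewrite Cmod_0; lra.
Qed.
Lemma coef22m w n : (Cmod w <= 1)%R -> (Cmod (a22 n + w * b22 n - 1) <= 2 * C0 * mu n)%R.
Proof.
  intros hw. replace (a22 n + w * b22 n - 1) with (0 + (a22 n - 1) + w * b22 n) by ring.
  eapply Rle_trans; [apply (Cmod_aff _ _ _ _ 0 (C0 * mu n) (C0 * mu n)); auto|lra].
  rewrite Cmod_0; lra.
Qed.
Lemma coef22 w n : (Cmod w <= 1)%R -> (Cmod (a22 n + w * b22 n) <= 1 + 2 * C0 * mu n)%R.
Proof.
  intros hw. replace (a22 n + w * b22 n) with (1 + (a22 n + w * b22 n - 1)) by ring.
  eapply Rle_trans; [apply Cmod_triangle|]. rewrite Cmod_1. pose proof (coef22m w n hw). lra.
Qed.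

Lemma Mw_bound w n v : (Cmod w <= 1)%R -> (nv (Mw w n v) <= (1 + ka * mu n) * nv v)%R.
Proof.
  intros hw. unfold ka. pose proof (mu_pos n). pose proof (nv_fst v). pose proof (nv_snd v).
  pose proof (Cmod_ge_0 (fst v)). pose proof (Cmod_ge_0 (snd v)).
  apply nv_le; simpl; (eapply Rle_trans; [apply Cmod_sum2|]).
  - pose proof (coef11 w n hw). pose proof (coef12 w n hw).
    pose proof (Cmod_ge_0 (a11 n + w * b11 n)). pose proof (Cmod_ge_0 (a12 n + w * b12 n)).
    assert (Cmod (a11 n + w * b11 n) * Cmod (fst v) <= (1 + 2 * C0 * mu n) * nv v)%R.
    { apply Rmult_le_compat; auto. }
    assert (Cmod (a12 n + w * b12 n) * Cmod (snd v) <= (2 * C0 * mu n) * nv v)%R.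
    { apply Rmult_le_compat; auto. }
    lra.
  - pose proof (coef21 w n hw). pose proof (coef22 w n hw).
    pose proof (Cmod_ge_0 (a21 n + w * b21 n)). pose proof (Cmod_ge_0 (a22 n + w * b22 n)).
    assert (Cmod (a21 n + w * b21 n) * Cmod (fst v) <= (2 * C0 * mu n) * nv v)%R.
    { apply Rmult_le_compat; auto. }
    assert (Cmod (a22 n + w * b22 n) * Cmod (snd v) <= (1 + 2 * C0 * mu n) * nv v)%R.
    { apply Rmult_le_compat; auto. }
    lra.
Qed.

Lemma Mw_sub w n u v : vsub (Mw w n u) (Mw w n v) = Mw w n (vsub u v).
Proof. unfold Mw, vsub; simpl. apply injective_projections; simpl; ring. Qed.

Lemma bounded_solution w s S f l : (Cmod w <= 1)%R -> (0 <= S)%R ->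
  (forall n, nv (s n) <= S * nu n)%R -> solP w s f -> cvP f l ->
  forall n, (nv (f n) <= E3 * (nv l + 9 * S))%R.
Proof.
  intros hw hS hs Hf [Hl1 Hl2]. unfold E3.
  apply (gronwall_lim (fun n => nv (f n)) ka S (nv l) ka_pos hS).
  - intros; apply nv_pos.
  - intros n. rewrite (Hf n) at 1. eapply Rle_trans; [apply nv_add|].
    pose proof (Mw_bound w n (f (n+1)%Z) hw). pose proof (hs n). lra.
  - intros eta heta n.
    destruct (Hl1 eta heta) as [N1 H1]. destruct (Hl2 eta heta) as [N2 H2].
    exists (Z.max n (Z.max N1 N2)). split; [lia|].
    specialize (H1 (Z.max n (Z.max N1 N2)) ltac:(lia)). specialize (H2 (Z.max n (Z.max N1 N2)) ltac:(lia)).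
    apply nv_le.
    + eapply Rle_trans; [apply (Cmod_tri_sub _ (fst l))|].
      pose proof (nv_fst l). lra.
    + eapply Rle_trans; [apply (Cmod_tri_sub _ (snd l))|].
      pose proof (nv_snd l). lra.
Qed.

Lemma cvP_sub f g l : cvP f l -> cvP g l -> cvP (fun n => vsub (f n) (g n)) (RtoC 0, RtoC 0).
Proof.
  intros [h1 h2] [g1 g2]. split; simpl.
  - replace (RtoC 0) with (fst l + (-1) * fst l) by ring.
    eapply cv_pinf_ext; [|apply (cv_pinf_lin _ _ _ _ (-1) h1 g1)]. intros; simpl; ring.
  - replace (RtoC 0) with (snd l + (-1) * snd l) by ring.
    eapply cv_pinf_ext; [|apply (cv_pinf_lin _ _ _ _ (-1) h2 g2)]. intros; simpl; ring.
Qed.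

Lemma uniq_solution w s f g l : (Cmod w <= 1)%R -> solP w s f -> solP w s g -> cvP f l -> cvP g l ->
  forall n, f n = g n.
Proof.
  intros hw Hf Hg Hfl Hgl n.
  assert (Hd : solP w zero2 (fun n => vsub (f n) (g n))).
  { intros m. rewrite (Hf m), (Hg m). unfold vadd, vsub, zero2, Mw; simpl.
    apply injective_projections; simpl; ring. }
  pose proof (bounded_solution w zero2 0 _ _ hw (Rle_refl 0)
     ltac:(intros; unfold nv, zero2; simpl; rewrite Cmod_0, Rmax_left; [pose proof (nu_pos n0); lra | lra])
     Hd (cvP_sub f g l Hfl Hgl) n) as H.
  apply nv_eq0. eapply Rle_trans; [apply H|]. unfold nv; simpl. rewrite Cmod_0, Rmax_left by lra. lra.
Qed.

Lemma lim_minf_solution w s S B f : (Cmod w <= 1)%R -> (0 <= S)%R -> (0 <= B)%R ->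
  (forall n, nv (s n) <= S * nu n)%R -> solP w s f -> (forall n, nv (f n) <= B)%R ->
  exists L, cv_minf (fun n => snd (f n)) L.
Proof.
  intros hw hS hB hs Hf Hb.
  destruct (rate_minf (fun n => snd (f n)) (4 * C0 * B + S)%R ltac:(nra)) as [L [HL _]].
  - apply tele; [nra|]. intros n. rewrite (Hf n) at 1. unfold vadd, Mw; simpl.
    set (x := f (n+1)%Z).
    replace ((a21 n + w * b21 n) * fst x + (a22 n + w * b22 n) * snd x + snd (s n) - snd x)
      with ((a21 n + w * b21 n) * fst x + (a22 n + w * b22 n - 1) * snd x + snd (s n)) by ring.
    eapply Rle_trans; [apply Cmod_triangle|].
    eapply Rle_trans; [apply Rplus_le_compat; [apply Cmod_sum2| apply (Rle_trans _ _ _ (nv_snd (s n)) (hs n))]|].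
    pose proof (coef21 w n hw). pose proof (coef22m w n hw).
    pose proof (Rle_trans _ _ _ (nv_fst x) (Hb (n+1)%Z)). pose proof (Rle_trans _ _ _ (nv_snd x) (Hb (n+1)%Z)).
    pose proof (Cmod_ge_0 (fst x)). pose proof (Cmod_ge_0 (snd x)).
    pose proof (Cmod_ge_0 (a21 n + w * b21 n)). pose proof (Cmod_ge_0 (a22 n + w * b22 n - 1)).
    pose proof (mu_le_nu n). pose proof (mu_pos n).
    assert (Cmod (a21 n + w * b21 n) * Cmod (fst x) <= 2 * C0 * mu n * B)%R by (apply Rmult_le_compat; auto).
    assert (Cmod (a22 n + w * b22 n - 1) * Cmod (snd x) <= 2 * C0 * mu n * B)%R by (apply Rmult_le_compat; auto).
    assert (C0 * mu n * B <= C0 * nu n * B)%R.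
    { apply Rmult_le_compat_r; auto. apply Rmult_le_compat_l; auto. }
    nra.
  - exists L; auto.
Qed.


Lemma cv_pinf_const (c : C) : cv_pinf (fun _ => c) c.
Proof. intros e he. exists 0%Z. intros. replace (c - c) with (RtoC 0) by ring. rewrite Cmod_0. auto. Qed.

Lemma cv_pinf_comb (x y z : Z -> C) (a b c w g : C) :
  cv_pinf x a -> cv_pinf y b -> cv_pinf z c ->
  cv_pinf (fun n => (x n - y n - w * z n) * g) ((a - b - w * c) * g).
Proof.
  intros hx hy hz.
  pose proof (cv_pinf_lin _ _ _ _ (-1) hx hy) as h1.
  pose proof (cv_pinf_lin _ _ _ _ (- w) h1 hz) as h2.
  pose proof (cv_pinf_lin _ _ _ _ g (cv_pinf_const 0) h2) as h3.
  replace ((a - b - w * c) * g) with (0 + g * (a + -1 * b + - w * c)) by ring.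
  eapply cv_pinf_ext; [|apply h3]. intros; simpl; ring.
Qed.

Lemma cv_nat_bound (u : nat -> C) (l : C) (B : R) : cv_nat u l -> (forall n, Cmod (u n) <= B)%R -> (Cmod l <= B)%R.
Proof.
  intros H hb. apply le_eps_le. intros e he. destruct (H e he) as [N HN]. specialize (HN N (le_n N)).
  specialize (hb N). pose proof (Cmod_tri_sub l (u N)). rewrite Cmod_sub_sym in H0. lra.
Qed.

Fixpoint itr (w : C) (s : Z -> C * C) (e : C * C) (k : nat) (n : Z) : C * C :=
  match k with
  | O => e
  | S k' => vadd (Mw w n (itr w s e k' (n+1)%Z)) (s n)
  end.

Lemma vsub_vadd a b c : vsub (vadd a c) (vadd b c) = vsub a b.
Proof. unfold vsub, vadd; apply injective_projections; simpl; ring. Qed.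

Lemma exp_le3 x : (0 <= x <= 3)%R -> (exp (ka * x) <= E3)%R.
Proof.
  intros hx. unfold E3. pose proof ka_pos.
  destruct (Req_dec (ka * x) (3 * ka)) as [h|h]; [rewrite h; lra|].
  left. apply exp_increasing. nra.
Qed.

Lemma exist_solution w s Sb e2 : (Cmod w <= 1)%R -> (0 <= Sb)%R ->
  (forall n, nv (s n) <= Sb * nu n)%R -> exists f, solP w s f /\ cvP f (RtoC 0, e2).
Proof.
  intros hw hS hs.
  set (e := (RtoC 0, e2)).
  set (K1 := (2 * C0 * Cmod e2 + Sb)%R).
  assert (hK1 : (0 <= K1)%R) by (unfold K1; pose proof (Cmod_ge_0 e2); nra).
  assert (D0 : forall n, (nv (vsub (itr w s e 1 n) (itr w s e 0 n)) <= K1 * nu n)%R).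
  { intros n. simpl. unfold e, vadd, vsub, Mw; simpl.
    pose proof (mu_le_nu n). pose proof (mu_pos n). pose proof (Cmod_ge_0 e2).
    pose proof (nv_fst (s n)). pose proof (nv_snd (s n)). pose proof (hs n).
    apply nv_le; simpl.
    - replace ((a11 n + w * b11 n) * 0 + (a12 n + w * b12 n) * e2 + fst (s n) - 0)
        with ((a12 n + w * b12 n) * e2 + fst (s n)) by ring.
      eapply Rle_trans; [apply Cmod_triangle|]. rewrite Cmod_mult.
      pose proof (coef12 w n hw).
      assert (Cmod (a12 n + w * b12 n) * Cmod e2 <= 2 * C0 * nu n * Cmod e2)%R.
      { apply Rmult_le_compat_r; auto. nra. }
      unfold K1. nra.
    - replace ((a21 n + w * b21 n) * 0 + (a22 n + w * b22 n) * e2 + snd (s n) - e2)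
        with ((a22 n + w * b22 n - 1) * e2 + snd (s n)) by ring.
      eapply Rle_trans; [apply Cmod_triangle|]. rewrite Cmod_mult.
      pose proof (coef22m w n hw).
      assert (Cmod (a22 n + w * b22 n - 1) * Cmod e2 <= 2 * C0 * nu n * Cmod e2)%R.
      { apply Rmult_le_compat_r; auto. nra. }
      unfold K1. nra. }
  assert (Dk : forall k n, (nv (vsub (itr w s e (S k) n) (itr w s e k n)) <=
             exp (ka * (Psi n - Psi (n + Z.of_nat k))) * (K1 * nu (n + Z.of_nat k)))%R).
  { induction k as [|k IH]; intros n.
    - simpl Z.of_nat. rewrite Z.add_0_r. replace (ka * (Psi n - Psi n))%R with 0%R by ring.
      rewrite exp_0, Rmult_1_l. apply D0.
    - change (itr w s e (S (S k)) n) with (vadd (Mw w n (itr w s e (S k) (n+1)%Z)) (s n)).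
      change (itr w s e (S k) n) with (vadd (Mw w n (itr w s e k (n+1)%Z)) (s n)).
      rewrite vsub_vadd, Mw_sub.
      eapply Rle_trans; [apply Mw_bound; auto|].
      specialize (IH (n+1)%Z).
      replace (n + 1 + Z.of_nat k)%Z with (n + Z.of_nat (S k))%Z in IH by lia.
      pose proof (mu_pos n). pose proof ka_pos.
      assert (h1 : (1 + ka * mu n <= exp (ka * mu n))%R) by apply exp_ineq1_le.
      assert (hEe : exp (ka * (Psi n - Psi (n + Z.of_nat (S k)))) =
                    (exp (ka * mu n) * exp (ka * (Psi (n + 1) - Psi (n + Z.of_nat (S k)))))%R).
      { rewrite <- exp_plus. f_equal. unfold mu. ring. }
      rewrite hEe. rewrite Rmult_assoc.
      apply Rmult_le_compat; auto.
      + nra.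
      + apply nv_pos. }
  assert (DkE : forall k n, (nv (vsub (itr w s e (S k) n) (itr w s e k n)) <= E3 * K1 * nu (n + Z.of_nat k))%R).
  { intros k n. eapply Rle_trans; [apply Dk|]. rewrite Rmult_assoc.
    apply Rmult_le_compat_r. { pose proof (nu_pos (n + Z.of_nat k)); nra. }
    apply exp_le3. pose proof (Psi_bounds n). pose proof (Psi_bounds (n + Z.of_nat k)).
    pose proof (Psi_mono n (n + Z.of_nat k) ltac:(lia)). lra. }
  set (K := (E3 * K1)%R).
  assert (hK : (0 <= K)%R) by (unfold K, E3; pose proof (exp_pos (3 * ka)); nra).
  assert (Sum : forall i j n, (nv (vsub (itr w s e (j + i) n) (itr w s e j n)) <=
                  K * (Phi (n + Z.of_nat j) - Phi (n + Z.of_nat (j + i))))%R).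
  { induction i as [|i IH]; intros j n.
    - rewrite Nat.add_0_r. unfold vsub, nv; simpl. rewrite !Cminus_eq_0 || idtac.
      replace (fst (itr w s e j n) - fst (itr w s e j n)) with (RtoC 0) by ring.
      replace (snd (itr w s e j n) - snd (itr w s e j n)) with (RtoC 0) by ring.
      rewrite Cmod_0, Rmax_left by lra. lra.
    - eapply Rle_trans; [apply (nv_tri3 _ (itr w s e (j + i) n))|].
      replace (j + S i)%nat with (S (j + i)) by lia.
      pose proof (DkE (j + i)%nat n). pose proof (IH j n).
      assert (nu (n + Z.of_nat (j + i)) = Phi (n + Z.of_nat (j + i)) - Phi (n + Z.of_nat (S (j + i))))%R.
      { unfold nu. f_equal. f_equal. lia. }
      unfold K in *. rewrite H1 in H. eapply Rle_trans; [apply Rplus_le_compat; [apply H|apply H0]|]. right; ring. }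
  assert (Ex : forall n, exists l, forall j, (nv (vsub (itr w s e j n) l) <= K * Phi (n + Z.of_nat j))%R).
  { intros n.
    assert (Hr : forall j J, (j <= J)%nat -> (nv (vsub (itr w s e J n) (itr w s e j n)) <=
                  K * (Phi (n + Z.of_nat j) - Phi (n + Z.of_nat J)))%R).
    { intros j J hj. replace J with (j + (J - j))%nat by lia. apply Sum. }
    assert (Hl : forall e0, (0 < e0)%R -> exists N, forall j, (N <= j)%nat -> (Phi (n + Z.of_nat j) < e0)%R).
    { intros e0 he0. destruct (Phi_lim_p e0 he0) as [N HN]. exists (Z.to_nat (N - n)). intros j hj. apply HN. lia. }
    destruct (C_complete_rate (fun j => fst (itr w s e j n)) K (fun j => Phi (n + Z.of_nat j)) hK)
      as [l1 Hl1]; [intros; apply Phi_bounds| |auto|].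
    { intros j J hj. eapply Rle_trans; [|apply (Hr j J hj)]. apply (nv_fst (vsub _ _)). }
    destruct (C_complete_rate (fun j => snd (itr w s e j n)) K (fun j => Phi (n + Z.of_nat j)) hK)
      as [l2 Hl2]; [intros; apply Phi_bounds| |auto|].
    { intros j J hj. eapply Rle_trans; [|apply (Hr j J hj)]. apply (nv_snd (vsub _ _)). }
    exists (l1, l2). intros j. apply nv_le; simpl; auto. }
  destruct (choice_Z _ Ex) as [f Hf].
  exists f. split.
  - intros n. apply nv_eq0. apply le_eps_le. intros eps heps. rewrite Rplus_0_l.
    set (c := (K * (2 + ka * mu n) + 1)%R).
    assert (hkm : (0 <= ka * mu n)%R) by (apply Rmult_le_pos; [apply ka_pos| apply Rlt_le, mu_pos]).
    assert (hc : (0 < c)%R) by (unfold c; assert (0 <= K * (2 + ka * mu n))%R by (apply Rmult_le_pos; lra); lra).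
    destruct (Phi_lim_p (eps / c)%R ltac:(apply Rdiv_lt_0_compat; lra)) as [N HN].
    set (j := Z.to_nat (N - n)).
    pose proof (Hf n (S j)) as A1. rewrite nv_sub_sym in A1.
    pose proof (Mw_bound w n (vsub (itr w s e j (n + 1)%Z) (f (n + 1)%Z)) hw) as A2.
    pose proof (Hf (n+1)%Z j) as A3.
    assert (hP : (Phi (n + Z.of_nat j) < eps / c)%R) by (apply HN; unfold j; lia).
    assert (hP1 : (Phi (n + Z.of_nat (S j)) <= Phi (n + Z.of_nat j))%R) by (apply Phi_mono; lia).
    assert (hP2 : (Phi (n + 1 + Z.of_nat j) <= Phi (n + Z.of_nat j))%R) by (apply Phi_mono; lia).
    pose proof (mu_pos n). pose proof ka_pos. pose proof (Phi_bounds (n + Z.of_nat j)).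
    pose proof (nv_pos (vsub (itr w s e j (n + 1)%Z) (f (n + 1)%Z))).
    assert (H3 : ((1 + ka * mu n) * nv (vsub (itr w s e j (n + 1)%Z) (f (n + 1)%Z)) <=
            (1 + ka * mu n) * (K * Phi (n + Z.of_nat j)))%R).
    { apply Rmult_le_compat_l; [nra|]. eapply Rle_trans; [apply A3|]. apply Rmult_le_compat_l; auto. }
    assert (K * (2 + ka * mu n) * Phi (n + Z.of_nat j) <= c * Phi (n + Z.of_nat j))%R by (unfold c; nra).
    assert (c * Phi (n + Z.of_nat j) < eps)%R.
    { apply (Rmult_lt_compat_l c) in hP; auto. replace (c * (eps / c))%R with eps in hP by (field; lra). lra. }
    assert (H6 : (K * Phi (n + Z.of_nat (S j)) <= K * Phi (n + Z.of_nat j))%R) by (apply Rmult_le_compat_l; auto).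
    eapply Rle_trans; [apply (nv_tri3 _ (itr w s e (S j) n))|].
    eapply Rle_trans; [apply Rplus_le_compat; [apply A1|]|].
    { change (itr w s e (S j) n) with (vadd (Mw w n (itr w s e j (n+1)%Z)) (s n)).
      rewrite vsub_vadd, Mw_sub. eapply Rle_trans; [apply A2|apply H3]. }
    nra.
  - assert (HB : forall n, (nv (vsub (f n) e) <= K * Phi n)%R).
    { intros n. rewrite nv_sub_sym. pose proof (Hf n 0%nat). simpl in H. rewrite Z.add_0_r in H. auto. }
    split; intros eps heps;
    destruct (Phi_lim_p (eps / (K + 1))%R ltac:(apply Rdiv_lt_0_compat; lra)) as [N HN];
    exists N; intros n hn; specialize (HN n hn); pose proof (HB n); pose proof (Phi_bounds n);
    (assert (K * Phi n < eps)%R by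
      (apply (Rmult_lt_compat_l (K+1)) in HN; [|lra];
       replace ((K + 1) * (eps / (K + 1)))%R with eps in HN by (field; lra); nra)).
    + pose proof (nv_fst (vsub (f n) e)). simpl in *. lra.
    + pose proof (nv_snd (vsub (f n) e)). simpl in *. lra.
Qed.

Lemma b11_bound n : (Cmod (b11 n) <= 1 + 3 * C0)%R.
Proof.
  replace (b11 n) with (1 + (b11 n - 1)) by ring. eapply Rle_trans; [apply Cmod_triangle|].
  rewrite Cmod_1. pose proof (Hb11 n). pose proof (mu_le3 n). pose proof (mu_pos n). nra.
Qed.

Lemma Bm_fst n x : (Cmod (fst (Bm n x)) <= (1 + 3 * C0) * Cmod (fst x) + C0 * mu n * nv x)%R.
Proof.
  unfold Bm; simpl. eapply Rle_trans; [apply Cmod_sum2|].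
  pose proof (b11_bound n). pose proof (Hb12 n). pose proof (nv_snd x).
  pose proof (Cmod_ge_0 (fst x)). pose proof (Cmod_ge_0 (snd x)). pose proof (Cmod_ge_0 (b12 n)).
  apply Rplus_le_compat; [apply Rmult_le_compat_r; auto| apply Rmult_le_compat; auto].
Qed.

Lemma Bm_snd n x : (Cmod (snd (Bm n x)) <= 2 * C0 * mu n * nv x)%R.
Proof.
  unfold Bm; simpl. eapply Rle_trans; [apply Cmod_sum2|].
  pose proof (Hb21 n). pose proof (Hb22 n). pose proof (nv_snd x). pose proof (nv_fst x).
  pose proof (Cmod_ge_0 (fst x)). pose proof (Cmod_ge_0 (snd x)).
  pose proof (Cmod_ge_0 (b21 n)). pose proof (Cmod_ge_0 (b22 n)).
  assert (Cmod (b21 n) * Cmod (fst x) <= C0 * mu n * nv x)%R by (apply Rmult_le_compat; auto).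
  assert (Cmod (b22 n) * Cmod (snd x) <= C0 * mu n * nv x)%R by (apply Rmult_le_compat; auto).
  lra.
Qed.

Lemma first_small0 s f B n : solP 0 s f -> (forall m, nv (f m) <= B)%R ->
  (Cmod (fst (f n)) <= 2 * C0 * B * mu n + Cmod (fst (s n)))%R.
Proof.
  intros Hf Hb. rewrite (Hf n). unfold vadd, Mw; simpl.
  replace (a11 n + 0 * b11 n) with (a11 n) by ring. replace (a12 n + 0 * b12 n) with (a12 n) by ring.
  eapply Rle_trans; [apply Cmod_triangle|].
  eapply Rle_trans; [apply Rplus_le_compat_r; apply Cmod_sum2|].
  pose proof (Ha11 n). pose proof (Ha12 n).
  pose proof (Rle_trans _ _ _ (nv_fst _) (Hb (n+1)%Z)). pose proof (Rle_trans _ _ _ (nv_snd _) (Hb (n+1)%Z)).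
  pose proof (Cmod_ge_0 (fst (f (n+1)%Z))). pose proof (Cmod_ge_0 (snd (f (n+1)%Z))).
  pose proof (Cmod_ge_0 (a11 n)). pose proof (Cmod_ge_0 (a12 n)).
  assert (Cmod (a11 n) * Cmod (fst (f (n + 1)%Z)) <= C0 * mu n * B)%R by (apply Rmult_le_compat; auto).
  assert (Cmod (a12 n) * Cmod (snd (f (n + 1)%Z)) <= C0 * mu n * B)%R by (apply Rmult_le_compat; auto).
  lra.
Qed.

Lemma src_bound g G B : (0 <= G)%R -> (0 <= B)%R ->
  (forall m, Cmod (fst (g m)) <= G * (mu m + mu (m+1)))%R -> (forall m, nv (g m) <= B)%R ->
  forall n, (nv (Bm n (g (n+1)%Z)) <= ((1 + 3 * C0) * G + 2 * C0 * B) * nu n)%R.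
Proof.
  intros hG hB hg hb n. rewrite nu_eq.
  pose proof (mu_pos n). pose proof (mu_pos (n+1)). pose proof (mu_pos (n+2)).
  pose proof (hg (n+1)%Z) as h1. replace (n + 1 + 1)%Z with (n+2)%Z in h1 by lia.
  pose proof (hb (n+1)%Z).
  apply nv_le.
  - eapply Rle_trans; [apply Bm_fst|].
    assert ((1 + 3 * C0) * Cmod (fst (g (n + 1)%Z)) <= (1 + 3 * C0) * (G * (mu (n + 1) + mu (n + 2))))%R
      by (apply Rmult_le_compat_l; lra).
    assert (C0 * mu n * nv (g (n + 1)%Z) <= C0 * mu n * B)%R by (apply Rmult_le_compat_l; nra).
    assert (0 <= (1 + 3 * C0) * G * mu n)%R by (apply Rmult_le_pos; [nra|lra]).
    assert (0 <= C0 * B * mu n)%R by (apply Rmult_le_pos; nra).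
    assert (0 <= C0 * B * mu (n+1))%R by (apply Rmult_le_pos; nra).
    assert (0 <= C0 * B * mu (n+2))%R by (apply Rmult_le_pos; nra).
    eapply Rle_trans; [apply Rplus_le_compat; eauto|]. nra.
  - eapply Rle_trans; [apply Bm_snd|].
    assert (2 * C0 * mu n * nv (g (n + 1)%Z) <= 2 * C0 * mu n * B)%R by (apply Rmult_le_compat_l; nra).
    assert (0 <= (1 + 3 * C0) * G * mu n)%R by (apply Rmult_le_pos; [nra|lra]).
    assert (0 <= (1 + 3 * C0) * G * mu (n+1))%R by (apply Rmult_le_pos; [nra|lra]).
    assert (0 <= (1 + 3 * C0) * G * mu (n+2))%R by (apply Rmult_le_pos; [nra|lra]).
    assert (0 <= C0 * B * mu (n+1))%R by (apply Rmult_le_pos; nra).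
    assert (0 <= C0 * B * mu (n+2))%R by (apply Rmult_le_pos; nra).
    nra.
Qed.

Theorem gen_main : exists v0 v1 L0 L1 Kf,
  solP 0 zero2 v0 /\ cvP v0 (RtoC 0, RtoC 1) /\
  solP 0 (fun n => Bm n (v0 (n+1)%Z)) v1 /\ cvP v1 (RtoC 0, RtoC 0) /\
  cv_minf (fun n => snd (v0 n)) L0 /\ cv_minf (fun n => snd (v1 n)) L1 /\ (0 <= Kf)%R /\
  forall w : C, w <> 0 -> (Cmod w <= 1)%R ->
    (exists G, solP w zero2 G /\ cvP G (RtoC 0, RtoC 1)) /\
    forall G, solP w zero2 G -> cvP G (RtoC 0, RtoC 1) ->
      exists LG, cv_minf (fun n => snd (G n)) LG /\
        (Cmod (LG - L0 - w * L1) <= Kf * (Cmod w * Cmod w))%R.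
Proof.
  assert (hz : forall n, (nv (zero2 n) <= 0 * nu n)%R).
  { intros n. unfold nv, zero2; simpl. rewrite Cmod_0, Rmax_left by lra. lra. }
  assert (hw0 : (Cmod 0 <= 1)%R) by (rewrite Cmod_0; lra).
  destruct (exist_solution 0 zero2 0 1 hw0 (Rle_refl 0) hz) as [v0 [Hv0 Cv0]].
  set (B0 := (E3 * (nv (RtoC 0, RtoC 1) + 9 * 0))%R).
  assert (Hb0 : forall n, (nv (v0 n) <= B0)%R) by (apply (bounded_solution 0 zero2 0); auto; lra).
  assert (hB0 : (0 <= B0)%R) by (pose proof (Hb0 0%Z); pose proof (nv_pos (v0 0%Z)); lra).
  clearbody B0.
  assert (F0 : forall m, (Cmod (fst (v0 m)) <= 2 * C0 * B0 * mu m)%R).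
  { intros m. eapply Rle_trans; [apply (first_small0 zero2 v0 B0 m Hv0 Hb0)|].
    unfold zero2; simpl. rewrite Cmod_0. lra. }
  set (s1 := fun n => Bm n (v0 (n+1)%Z)).
  set (S1 := ((1 + 3 * C0) * (2 * C0 * B0) + 2 * C0 * B0)%R).
  assert (hS1 : (0 <= S1)%R) by (unfold S1; pos).
  assert (Hs1 : forall n, (nv (s1 n) <= S1 * nu n)%R).
  { apply src_bound; auto. repeat apply Rmult_le_pos; lra. intros m. pose proof (F0 m). pose proof (mu_pos (m+1)).
    assert (0 <= 2*C0*B0*mu(m+1))%R by (repeat apply Rmult_le_pos; lra). lra. }
  destruct (exist_solution 0 s1 S1 0 hw0 hS1 Hs1) as [v1 [Hv1 Cv1]].
  set (B1 := (E3 * (nv (RtoC 0, RtoC 0) + 9 * S1))%R).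
  assert (Hb1 : forall n, (nv (v1 n) <= B1)%R) by (apply (bounded_solution 0 s1 S1); auto).
  assert (hB1 : (0 <= B1)%R) by (pose proof (Hb1 0%Z); pose proof (nv_pos (v1 0%Z)); lra).
  clearbody B1.
  set (G1 := (2 * C0 * B1 + (1 + 3 * C0) * (2 * C0 * B0) + C0 * B0)%R).
  assert (hG1 : (0 <= G1)%R) by (unfold G1; pos).
  assert (F1 : forall m, (Cmod (fst (v1 m)) <= G1 * (mu m + mu (m+1)))%R).
  { intros m. eapply Rle_trans; [apply (first_small0 s1 v1 B1 m Hv1 Hb1)|].
    unfold s1. eapply Rle_trans; [apply Rplus_le_compat_l; apply Bm_fst|].
    pose proof (F0 (m+1)%Z). pose proof (Hb0 (m+1)%Z). pose proof (mu_pos m). pose proof (mu_pos (m+1)).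
    assert ((1 + 3 * C0) * Cmod (fst (v0 (m + 1)%Z)) <= (1 + 3 * C0) * (2 * C0 * B0 * mu (m + 1)))%R
      by (apply Rmult_le_compat_l; lra).
    assert (C0 * mu m * nv (v0 (m + 1)%Z) <= C0 * mu m * B0)%R by (apply Rmult_le_compat_l; nra).
    assert (0 <= (1 + 3 * C0) * (2 * C0 * B0) * mu m)%R by (pos).
    assert (0 <= 2 * C0 * B1 * mu (m+1))%R by (pos).
    assert (0 <= C0 * B0 * mu (m+1))%R by (pos).
    unfold G1. nra. }
  set (s2 := fun n => Bm n (v1 (n+1)%Z)).
  set (S2 := ((1 + 3 * C0) * G1 + 2 * C0 * B1)%R).
  assert (hS2 : (0 <= S2)%R) by (unfold S2; pos).
  assert (Hs2 : forall n, (nv (s2 n) <= S2 * nu n)%R) by (apply src_bound; auto).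
  destruct (lim_minf_solution 0 zero2 0 B0 v0 hw0 (Rle_refl 0) hB0 hz Hv0 Hb0) as [L0 HL0].
  destruct (lim_minf_solution 0 s1 S1 B1 v1 hw0 hS1 hB1 Hs1 Hv1 Hb1) as [L1 HL1].
  set (Kf := (E3 * (nv (RtoC 0, RtoC 0) + 9 * S2))%R).
  assert (hKf : (0 <= Kf)%R) by (unfold Kf, E3; pose proof (exp_pos (3 * ka)); pose proof (nv_pos (RtoC 0, RtoC 0)); nra).
  exists v0, v1, L0, L1, Kf. repeat split; auto; try apply Cv0; try apply Cv1.
  - destruct (exist_solution w zero2 0 1 H0 (Rle_refl 0) hz) as [G [HG CG]]. exists G; auto.
  - intros G HG CG.
    set (BG := (E3 * (nv (RtoC 0, RtoC 1) + 9 * 0))%R).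
    assert (HbG : forall n, (nv (G n) <= BG)%R) by (apply (bounded_solution w zero2 0); auto; lra).
    assert (hBG : (0 <= BG)%R) by (pose proof (HbG 0%Z); pose proof (nv_pos (G 0%Z)); lra).
    destruct (lim_minf_solution w zero2 0 BG G H0 (Rle_refl 0) hBG hz HG HbG) as [LG HLG].
    exists LG. split; auto.
    set (fq := fun n => ((fst (G n) - fst (v0 n) - w * fst (v1 n)) * / (w * w),
                        (snd (G n) - snd (v0 n) - w * snd (v1 n)) * / (w * w))).
    assert (Hfq : solP w s2 fq).
    { intros n. unfold fq, s2. rewrite (HG n), (Hv0 n), (Hv1 n). unfold s1, vadd, Mw, Bm, zero2; simpl.
      apply injective_projections; simpl; field; auto. }
    assert (Cfq : cvP fq (RtoC 0, RtoC 0)).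
    { destruct CG as [g1 g2]. destruct Cv0 as [c01 c02]. destruct Cv1 as [c11 c12]. simpl in *.
      split; simpl.
      - replace (RtoC 0) with ((0 - 0 - w * 0) * / (w * w)) at 1 by ring.
        apply cv_pinf_comb; auto.
      - replace (RtoC 0) with ((1 - 1 - w * 0) * / (w * w)) at 1 by ring.
        apply cv_pinf_comb; auto. }
    pose proof (bounded_solution w s2 S2 fq _ H0 hS2 Hs2 Hfq Cfq) as Bfq.
    assert (Hbd : forall n, (Cmod (snd (G n) - snd (v0 n) - w * snd (v1 n)) <= Kf * (Cmod w * Cmod w))%R).
    { intros n. pose proof (Bfq n).
      assert (H2 : (Cmod ((snd (G n) - snd (v0 n) - w * snd (v1 n)) * / (w * w)) <= Kf)%R).
      { eapply Rle_trans; [apply (nv_snd (fq n))|]. unfold Kf. exact H1. }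
      replace (snd (G n) - snd (v0 n) - w * snd (v1 n))
        with ((snd (G n) - snd (v0 n) - w * snd (v1 n)) * / (w * w) * (w * w)) by (field; auto).
      rewrite Cmod_mult, (Cmod_mult w w).
      apply Rmult_le_compat_r; [pose proof (Cmod_ge_0 w); nra|]. lra. }
    apply (cv_nat_bound (fun N => snd (G (- Z.of_nat N)%Z) - snd (v0 (- Z.of_nat N)%Z) - w * snd (v1 (- Z.of_nat N)%Z))).
    + pose proof (cv_nat_lin _ _ _ _ (-1) (cv_minf_nat _ _ HLG) (cv_minf_nat _ _ HL0)) as h1.
      pose proof (cv_nat_lin _ _ _ _ (- w) h1 (cv_minf_nat _ _ HL1)) as h2.
      replace (LG - L0 - w * L1) with (LG + -1 * L0 + - w * L1) by ring.
      eapply cv_nat_ext; [|apply h2]. intros; simpl; ring.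
    + intros N. apply Hbd.
Qed.
End Sys.

Lemma C1_nz : (RtoC 1) <> RtoC 0.
Proof. intros E. apply (f_equal fst) in E. simpl in E. lra. Qed.

Lemma prodZ_tele (p P : Z -> C) : (forall n, P n = p n * P (n+1)%Z) ->
  forall len a, prodZ p a len * P (a + Z.of_nat len)%Z = P a.
Proof.
  intros H len. induction len as [|l IH]; intros a.
  - simpl. rewrite Z.add_0_r. ring.
  - simpl prodZ. rewrite Nat2Z.inj_succ.
    replace (a + Z.succ (Z.of_nat l))%Z with (a + 1 + Z.of_nat l)%Z by lia.
    rewrite <- Cmult_assoc, IH. auto.
Qed.

Lemma sumZ_tele (g : Z -> C) : forall len a,
  sumZ (fun k => g k - g (k+1)%Z) a len = g a - g (a + Z.of_nat len)%Z.
Proof.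
  intros len. induction len as [|l IH]; intros a.
  - simpl. rewrite Z.add_0_r. ring.
  - simpl sumZ. rewrite IH. rewrite Nat2Z.inj_succ.
    replace (a + Z.succ (Z.of_nat l))%Z with (a + 1 + Z.of_nat l)%Z by lia. ring.
Qed.

Lemma sumZ_ext (f g : Z -> C) : (forall k, f k = g k) -> forall len a, sumZ f a len = sumZ g a len.
Proof. intros H len; induction len; intros a; simpl; auto. rewrite IHlen, H; auto. Qed.

Lemma sumZ_sub (f g : Z -> C) : forall len a, sumZ (fun k => f k - g k) a len = sumZ f a len - sumZ g a len.
Proof. intros len; induction len; intros a; simpl. ring. rewrite IHlen. ring. Qed.

Lemma psum_tele (g : Z -> C) (N : nat) :
  psumZ (fun k => g k - g (k+1)%Z) N = g (- Z.of_nat N)%Z - g (Z.of_nat N + 1)%Z.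
Proof.
  unfold psumZ. rewrite sumZ_tele. f_equal. f_equal. lia.
Qed.

Lemma sol_nonzero (p P : Z -> C) : (forall n, P n = p n * P (n+1)%Z) -> (forall n, p n <> 0) ->
  cv_pinf P 1 -> forall n, P n <> 0.
Proof.
  intros H hp Hc n E.
  assert (A : forall k : nat, P (n + Z.of_nat k)%Z = 0).
  { induction k. { rewrite Z.add_0_r; auto. }
    rewrite Nat2Z.inj_succ. pose proof (H (n + Z.of_nat k)%Z). rewrite IHk in H0.
    replace (n + Z.succ (Z.of_nat k))%Z with (n + Z.of_nat k + 1)%Z by lia.
    symmetry in H0. replace (P (n + Z.of_nat k + 1)%Z) with (/ p (n + Z.of_nat k)%Z * (p (n + Z.of_nat k)%Z * P (n + Z.of_nat k + 1)%Z)) by (field; apply hp).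
    rewrite H0. ring. }
  destruct (Hc (1/2)%R ltac:(lra)) as [N HN]. specialize (HN (Z.max N n) ltac:(lia)).
  replace (Z.max N n) with (n + Z.of_nat (Z.to_nat (Z.max N n - n)))%Z in HN by lia.
  rewrite A in HN. replace (0 - 1) with (- (1)) in HN by ring. rewrite Cmod_opp, Cmod_1 in HN. lra.
Qed.

Lemma inv_bound (p : C) (x : R) : (Cmod (p - 1) <= x)%R -> (x <= 1/2)%R -> (Cmod (/ p) <= exp (2 * x))%R.
Proof.
  intros h hx. assert (hx0 : (0 <= x)%R) by (pose proof (Cmod_ge_0 (p - 1)); lra).
  assert (hp : (1 - x <= Cmod p)%R).
  { pose proof (Cmod_tri_sub 1 p). rewrite Cmod_1, Cmod_sub_sym in H. lra. }
  assert (p <> 0) by (intros E; rewrite E, Cmod_0 in hp; lra).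
  rewrite Cmod_inv by auto.
  eapply Rle_trans; [|apply exp_ineq1_le].
  apply (Rmult_le_reg_r (Cmod p)); [lra|]. rewrite Rinv_l by lra. nra.
Qed.

Lemma prod_lemma (p P : Z -> C) (L : C) (Cp : R) : (0 <= Cp)%R ->
  (forall n, P n = p n * P (n+1)%Z) -> (forall n, p n <> 0) ->
  (forall n, Cmod (p n - 1) <= Cp * mu n)%R ->
  cv_pinf P 1 -> cv_minf P L -> prodZ_is p L /\ L <> 0 /\ (forall n, P n <> 0).
Proof.
  intros hCp H hp hb Hp Hm.
  pose proof (sol_nonzero p P H hp Hp) as Hnz.
  split; [|split; auto].
  - unfold prodZ_is.
    assert (E : forall N : nat, pprodZ p N = P (- Z.of_nat N)%Z / P (Z.of_nat N + 1)%Z).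
    { intros N. unfold pprodZ. pose proof (prodZ_tele p P H (2 * N + 1) (- Z.of_nat N)%Z).
      replace (- Z.of_nat N + Z.of_nat (2 * N + 1))%Z with (Z.of_nat N + 1)%Z in H0 by lia.
      rewrite <- H0. field. auto. }
    replace L with (L / 1) by (field; apply C1_nz).
    eapply cv_nat_ext; [intros; symmetry; apply E|].
    apply cv_nat_div; [apply C1_nz| apply cv_minf_nat; auto| apply cv_pinf_nat; auto].
  - intros EL. subst L.
    destruct (Psi_lim_m (/ (2 * Cp + 2))%R ltac:(apply Rinv_0_lt_compat; lra)) as [N HN].
    assert (hmu : forall k, (k + 1 <= N)%Z -> (Cp * mu k <= 1/2)%R).
    { intros k hk. specialize (HN (k+1)%Z hk). pose proof (Psi_bounds k). unfold mu.
      assert (Psi k - Psi (k + 1) <= / (2 * Cp + 2))%R by lra.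
      apply Rle_trans with (Cp * / (2 * Cp + 2))%R; [apply Rmult_le_compat_l; auto|].
      apply (Rmult_le_reg_r (2 * Cp + 2)); [lra|]. rewrite Rmult_assoc, Rinv_l by lra. lra. }
    set (M := (N - 1)%Z).
    assert (Fw : forall n (k : nat), (n + Z.of_nat k <= M)%Z ->
               (Cmod (P (n + Z.of_nat k)%Z) <= exp (2 * Cp * (Psi n - Psi (n + Z.of_nat k))) * Cmod (P n))%R).
    { intros n k. induction k as [|k IH]; intros hk.
      - rewrite Z.add_0_r. replace (2 * Cp * (Psi n - Psi n))%R with 0%R by ring. rewrite exp_0. lra.
      - rewrite Nat2Z.inj_succ in *. set (m := (n + Z.of_nat k)%Z) in *.
        replace (n + Z.succ (Z.of_nat k))%Z with (m + 1)%Z in * by (unfold m; lia).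
        assert (Em : P (m+1)%Z = / p m * P m) by (rewrite (H m); field; auto).
        rewrite Em, Cmod_mult.
        pose proof (inv_bound (p m) (Cp * mu m) (hb m) (hmu m ltac:(unfold M in hk; lia))).
        specialize (IH ltac:(lia)).
        replace (2 * Cp * (Psi n - Psi (m + 1)))%R with (2 * (Cp * mu m) + 2 * Cp * (Psi n - Psi m))%R
          by (unfold mu; ring).
        rewrite exp_plus, Rmult_assoc. apply Rmult_le_compat; auto using Cmod_ge_0. }
    apply (Hnz M). apply Cmod_eq_0. apply Rle_antisym; [|apply Cmod_ge_0].
    apply le_eps_le. intros e he. rewrite Rplus_0_l.
    destruct (Hm (e / exp (6 * Cp))%R ltac:(apply Rdiv_lt_0_compat; [lra|apply exp_pos])) as [N2 HN2].
    set (n := Z.min M N2).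
    pose proof (Fw n (Z.to_nat (M - n)) ltac:(unfold n; lia)) as F1.
    replace (n + Z.of_nat (Z.to_nat (M - n)))%Z with M in F1 by (unfold n; lia).
    specialize (HN2 n ltac:(unfold n; lia)). replace (P n - 0) with (P n) in HN2 by ring.
    assert (exp (2 * Cp * (Psi n - Psi M)) <= exp (6 * Cp))%R.
    { pose proof (Psi_bounds n). pose proof (Psi_bounds M).
      destruct (Req_dec (2 * Cp * (Psi n - Psi M)) (6 * Cp)) as [h|h]; [rewrite h; lra|].
      left. apply exp_increasing. pose proof (Psi_mono n M ltac:(unfold n; lia)). nra. }
    pose proof (exp_pos (6 * Cp)). pose proof (Cmod_ge_0 (P n)).
    eapply Rle_trans; [apply F1|].
    apply Rle_trans with (exp (6 * Cp) * Cmod (P n))%R; [apply Rmult_le_compat_r; auto|].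
    apply (Rmult_lt_compat_l (exp (6 * Cp))) in HN2; auto.
    replace (exp (6 * Cp) * (e / exp (6 * Cp)))%R with e in HN2 by (field; lra). lra.
Qed.

Lemma fin_max (f : Z -> R) (N : nat) : exists C, forall n, (Z.abs n < Z.of_nat N)%Z -> (f n <= C)%R.
Proof.
  induction N as [|N [C HC]].
  - exists 0%R. intros n h. lia.
  - exists (Rmax C (Rmax (f (Z.of_nat N)) (f (- Z.of_nat N)%Z))). intros n h.
    destruct (Z_lt_le_dec (Z.abs n) (Z.of_nat N)) as [h'|h'].
    + eapply Rle_trans; [apply HC; auto|apply Rmax_l].
    + assert (n = Z.of_nat N \/ n = - Z.of_nat N)%Z as [E|E] by lia; subst n.
      * eapply Rle_trans; [|apply Rmax_r]. apply Rmax_l.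
      * eapply Rle_trans; [|apply Rmax_r]. apply Rmax_r.
Qed.

Lemma rd_bound (q : Z -> C) : rapidly_decreasing q -> exists Cq, (0 <= Cq)%R /\ forall n, (Cmod (q n) <= Cq * mu n)%R.
Proof.
  intros hq. destruct (hq 2%nat 1%R ltac:(lra)) as [N HN].
  set (N' := Z.to_nat (Z.max N 1)).
  destruct (fin_max (fun n => Cmod (q n) / mu n)%R N') as [Cf HCf].
  exists (Rmax 8 Cf). split; [eapply Rle_trans; [|apply Rmax_l]; lra|].
  intros n. pose proof (mu_pos n).
  destruct (Z_lt_le_dec (Z.abs n) (Z.of_nat N')) as [h|h].
  - specialize (HCf n h). simpl in HCf.
    apply Rle_trans with (Cf * mu n)%R.
    + apply (Rmult_le_compat_r (mu n)) in HCf; [|lra]. unfold Rdiv in HCf.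
      rewrite Rmult_assoc, Rinv_l, Rmult_1_r in HCf by lra. auto.
    + apply Rmult_le_compat_r; [lra|apply Rmax_r].
  - assert (hN : (N <= Z.abs n)%Z) by (unfold N' in h; lia).
    assert (h1 : (1 <= IZR (Z.abs n))%R) by (apply IZR_le; unfold N' in h; lia).
    specialize (HN n hN). simpl in HN.
    pose proof (mu_lower n).
    set (x := IZR (Z.abs n)) in *.
    apply Rle_trans with (8 * mu n)%R; [|apply Rmult_le_compat_r; [lra|apply Rmax_l]].
    assert (Cmod (q n) < / (x * x))%R.
    { apply (Rmult_lt_reg_l (x * x)); [nra|]. rewrite Rinv_r by nra. lra. }
    assert (/ (x * x) <= 8 * / (2 * (x + 1) ^ 2))%R.
    { rewrite <- (Rinv_inv 8). rewrite <- Rinv_mult.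
      apply Rinv_le_contravar; [nra|]. simpl. nra. }
    lra.
Qed.

Lemma mu_small (e : R) : (0 < e)%R -> exists N : Z, forall n, (N <= Z.abs n)%Z -> (mu n < e)%R.
Proof.
  intros he. destruct (Psi_lim_p e he) as [N1 H1]. destruct (Psi_lim_m e he) as [N2 H2].
  exists (Z.max (Z.abs N1) (Z.abs N2 + 1)). intros n hn. unfold mu.
  destruct (Z_le_gt_dec 0 n).
  - specialize (H1 n ltac:(lia)). pose proof (Psi_bounds (n+1)). lra.
  - specialize (H2 (n+1)%Z ltac:(lia)). pose proof (Psi_bounds n). lra.
Qed.

Lemma small_cv (x : Z -> C) (K : R) : (forall n, Cmod (x n) <= K * mu n)%R ->
  cv_nat (fun N => x (Z.of_nat N + 1)%Z) 0 /\ cv_nat (fun N => x (- Z.of_nat N)%Z) 0.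
Proof.
  intros H.
  assert (A : forall e, (0 < e)%R -> exists N : Z, forall n, (N <= Z.abs n)%Z -> (Cmod (x n - 0) < e)%R).
  { intros e he. destruct (mu_small (e / (Rabs K + 1))%R ltac:(apply Rdiv_lt_0_compat; [lra|pose proof (Rabs_pos K); lra])) as [N HN].
    exists N. intros n hn. specialize (HN n hn). replace (x n - 0) with (x n) by ring.
    eapply Rle_lt_trans; [apply H|]. pose proof (mu_pos n). pose proof (Rle_abs K). pose proof (Rabs_pos K).
    apply Rle_lt_trans with ((Rabs K + 1) * mu n)%R; [nra|].
    apply (Rmult_lt_compat_l (Rabs K + 1)) in HN; [|lra].
    replace ((Rabs K + 1) * (e / (Rabs K + 1)))%R with e in HN by (field; lra). lra. }
  split; intros e he; destruct (A e he) as [N HN]; exists (Z.to_nat N); intros n hn; apply HN; lia.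
Qed.

Fixpoint Cpow_nz (z : C) (k : nat) : z <> 0 -> Cpow z k <> 0.
Proof.
  intros hz. destruct k; simpl.
  - apply C1_nz.
  - apply Cmult_neq_0; auto.
Qed.

Lemma zpow_nat (z : C) (k : nat) : zpow z (Z.of_nat k) = Cpow z k.
Proof. destruct k; simpl; auto. rewrite SuccNat2Pos.id_succ. auto. Qed.

Lemma zpow_nnat (z : C) (k : nat) : zpow z (- Z.of_nat k) = / Cpow z k.
Proof. destruct k; simpl. { field. } rewrite SuccNat2Pos.id_succ. auto. Qed.

Lemma Z_cases (n : Z) : exists k : nat, n = Z.of_nat k \/ n = (- Z.of_nat k)%Z.
Proof. exists (Z.to_nat (Z.abs n)). lia. Qed.

Lemma zpow_nz (z : C) n : z <> 0 -> zpow z n <> 0.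
Proof.
  intros hz. destruct (Z_cases n) as [k [E|E]]; subst.
  - rewrite zpow_nat. apply Cpow_nz; auto.
  - rewrite zpow_nnat. apply Cinv_neq_0 || (intros E; apply (Cpow_nz z k hz);
      replace (Cpow z k) with (Cpow z k * (/ Cpow z k * Cpow z k)) by (field; apply Cpow_nz; auto);
      rewrite E; ring).
Qed.

Lemma zpow_succ (z : C) n : z <> 0 -> zpow z (n + 1) = z * zpow z n.
Proof.
  intros hz. destruct (Z_cases n) as [k [E|E]]; subst.
  - replace (Z.of_nat k + 1)%Z with (Z.of_nat (S k)) by lia. rewrite !zpow_nat. simpl. auto.
  - destruct k.
    + simpl. ring.
    + replace (- Z.of_nat (S k) + 1)%Z with (- Z.of_nat k)%Z by lia. rewrite !zpow_nnat. simpl.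
      field. split; auto. apply Cpow_nz; auto.
Qed.

Lemma zpow_opp (z : C) n : z <> 0 -> zpow z (- n) = / zpow z n.
Proof.
  intros hz. destruct (Z_cases n) as [k [E|E]]; subst.
  - rewrite zpow_nnat, zpow_nat. auto.
  - rewrite Z.opp_involutive, zpow_nnat, zpow_nat. field. apply Cpow_nz; auto.
Qed.

Definition KT (D L1 : C) (Kf : R) : R :=
  (2 * (Kf + Cmod (L1 / D) * (Cmod L1 + Kf)) / (Cmod D * Cmod D))%R.

Definition w0 (D L1 : C) (Kf : R) : R :=
  Rmin 1 (Rmin (Cmod D / (4 * (Cmod L1 + 1))) (Cmod D / (4 * (Kf + 1)))).

Lemma w0_pos (D L1 : C) (Kf : R) : D <> 0 -> (0 <= Kf)%R -> (0 < w0 D L1 Kf)%R.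
Proof.
  intros hD hK. apply (proj1 (Cmod_gt_0 D)) in hD. pose proof (Cmod_ge_0 L1). unfold w0.
  repeat apply Rmin_glb_lt; try lra; apply Rdiv_lt_0_compat; lra.
Qed.

Lemma final_alg (D L1 L w : C) (Kf : R) : D <> 0 -> (0 <= Kf)%R -> (Cmod w <= w0 D L1 Kf)%R ->
  (Cmod (L - D - w * L1) <= Kf * (Cmod w * Cmod w))%R ->
  L <> 0 /\ (Cmod (/ L - / D * (1 - w * (L1 / D))) <= KT D L1 Kf * (Cmod w * Cmod w))%R.
Proof.
  intros hD hK hw hL.
  assert (hd : (0 < Cmod D)%R) by (apply Cmod_gt_0; auto).
  set (a := Cmod w) in *. set (d := Cmod D) in *.
  assert (ha0 : (0 <= a)%R) by apply Cmod_ge_0.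
  assert (hw1 : (a <= 1)%R) by (eapply Rle_trans; [apply hw|apply Rmin_l]).
  assert (hw2 : (a <= d / (4 * (Cmod L1 + 1)))%R) by (eapply Rle_trans; [apply hw|]; unfold w0; eapply Rle_trans; [apply Rmin_r|apply Rmin_l]).
  assert (hw3 : (a <= d / (4 * (Kf + 1)))%R) by (eapply Rle_trans; [apply hw|]; unfold w0; eapply Rle_trans; [apply Rmin_r|apply Rmin_r]).
  pose proof (Cmod_ge_0 L1) as hl1.
  assert (h2 : (4 * a * Cmod L1 <= d)%R).
  { apply (Rmult_le_compat_l (4 * (Cmod L1 + 1))) in hw2; [|lra].
    replace (4 * (Cmod L1 + 1) * (d / (4 * (Cmod L1 + 1))))%R with d in hw2 by (field; lra). nra. }
  assert (h3 : (4 * a * Kf <= d)%R).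
  { apply (Rmult_le_compat_l (4 * (Kf + 1))) in hw3; [|lra].
    replace (4 * (Kf + 1) * (d / (4 * (Kf + 1))))%R with d in hw3 by (field; lra). nra. }
  assert (hLD : (Cmod (L - D) <= a * Cmod L1 + Kf * (a * a))%R).
  { replace (L - D) with ((L - D - w * L1) + w * L1) by ring.
    eapply Rle_trans; [apply Cmod_triangle|]. rewrite Cmod_mult. fold a. lra. }
  assert (hLD2 : (Cmod (L - D) <= d / 2)%R).
  { assert (Kf * (a * a) <= Kf * a)%R by (apply Rmult_le_compat_l; nra). nra. }
  assert (hLb : (d / 2 <= Cmod L)%R).
  { pose proof (Cmod_tri_sub D L). fold d in H. rewrite Cmod_sub_sym in H. lra. }
  assert (hL0 : L <> 0) by (intros E; rewrite E, Cmod_0 in hLb; lra).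
  split; auto.
  set (S := L1 / D).
  assert (Enum : / L - / D * (1 - w * S) = (- (L - D - w * L1) + w * S * (L - D)) / (L * D)).
  { unfold S. field. split; auto. }
  rewrite Enum. rewrite Cmod_div by (apply Cmult_neq_0; auto). rewrite Cmod_mult.
  set (X := (Kf + Cmod S * (Cmod L1 + Kf))%R).
  pose proof (Cmod_ge_0 S) as hS.
  assert (hnum : (Cmod (- (L - D - w * L1) + w * S * (L - D)) <= X * (a * a))%R).
  { eapply Rle_trans; [apply Cmod_triangle|]. rewrite Cmod_opp, !Cmod_mult. fold a.
    assert (Cmod (L - D) <= a * (Cmod L1 + Kf))%R by (assert (Kf * (a * a) <= Kf * a)%R by (apply Rmult_le_compat_l; nra); nra).
    assert (a * Cmod S * Cmod (L - D) <= a * Cmod S * (a * (Cmod L1 + Kf)))%R by (apply Rmult_le_compat_l; nra).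
    unfold X. nra. }
  unfold KT. fold S d. fold X.
  assert (hX : (0 <= X)%R) by (unfold X; nra).
  apply (Rmult_le_reg_r (Cmod L * d)); [nra|].
  unfold Rdiv. rewrite Rmult_assoc, Rinv_l by nra. rewrite Rmult_1_r.
  apply Rle_trans with (X * (a * a))%R; auto.
  replace (2 * X * / (d * d) * (a * a) * (Cmod L * d))%R with (X * (a * a) * (2 * Cmod L / d))%R by (field; lra).
  assert (1 <= 2 * Cmod L / d)%R.
  { apply (Rmult_le_reg_r d); [lra|]. unfold Rdiv. rewrite Rmult_assoc, Rinv_l by lra. lra. }
  assert (0 <= X * (a * a))%R by nra. nra.
Qed.

Lemma Cinv_nz (x : C) : x <> 0 -> / x <> 0.
Proof. intros hx E. apply C1_nz. replace (RtoC 1) with (x * / x) by (field; auto). rewrite E. ring. Qed.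

Lemma Cinv_inv' (x : C) : x <> 0 -> / / x = x.
Proof. intros hx. field. auto. Qed.

Lemma qr_bound (q r : Z -> C) (Cq Cr : R) : (0 <= Cq)%R -> (0 <= Cr)%R ->
  (forall n, Cmod (q n) <= Cq * mu n)%R -> (forall n, Cmod (r n) <= Cr * mu n)%R ->
  forall n m, (Cmod (q n * r m) <= 3 * Cq * Cr * mu n)%R.
Proof.
  intros hq0 hr0 hq hr n m. rewrite Cmod_mult.
  pose proof (hq n). pose proof (hr m). pose proof (mu_le3 m). pose proof (mu_pos m). pose proof (mu_pos n).
  pose proof (Cmod_ge_0 (q n)). pose proof (Cmod_ge_0 (r m)).
  assert (Cmod (r m) <= 3 * Cr)%R by nra.
  apply Rle_trans with (Cq * mu n * (3 * Cr))%R; [apply Rmult_le_compat; auto|]. right; ring.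
Qed.

Lemma Cmod_pow2 (z : C) : Cmod (z * z) = (Cmod z * Cmod z)%R.
Proof. apply Cmod_mult. Qed.

Lemma Cmod_z_lt (z : C) (d : R) : (d <= 1)%R -> (Cmod z < d)%R -> (Cmod (z * z) < d)%R.
Proof.
  intros h1 h2. rewrite Cmod_pow2. pose proof (Cmod_ge_0 z). nra.
Qed.

Lemma psum_tele2 (c g : Z -> C) (N : nat) :
  sumZ (fun k => (c k - c (k+1)%Z) - (g k - g (k+1)%Z)) (- Z.of_nat N)%Z (2 * N + 1) =
  (c (- Z.of_nat N)%Z - c (Z.of_nat N + 1)%Z) - (g (- Z.of_nat N)%Z - g (Z.of_nat N + 1)%Z).
Proof.
  rewrite (sumZ_sub (fun k => c k - c (k+1)%Z) (fun k => g k - g (k+1)%Z)).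
  pose proof (psum_tele c N). pose proof (psum_tele g N). unfold psumZ in *. rewrite H, H0. reflexivity.
Qed.

Definition Sterm (q r : Z -> C) (k : Z) : C :=
  r k * (q k - q (k + 1)%Z - q k * q (k + 1)%Z * r (k + 1)%Z)
    / ((1 - q k * r k) * (1 - q (k + 1)%Z * r (k + 1)%Z)).

Theorem T_part (q r : Z -> C) (hq : rapidly_decreasing q) (hr : rapidly_decreasing r)
  (h1 : forall n : Z, 1 - q n * r n <> 0) :
  exists Dinf Sinf : C,
    prodZ_is (fun j => 1 - q j * r j) Dinf /\
    sumZ_is (Sterm q r) Sinf /\
    (exists (delta K : R), (0 < delta)%R /\
      forall z : C, (0 < Cmod z)%R -> (Cmod z < delta)%R ->
        (exists t, transT q r z t) /\
        forall t, transT q r z t ->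
          (Cmod (t - / Dinf * (1 - z ^ 2 * Sinf)) <= K * Cmod z ^ 4)%R).
Proof.
  destruct (rd_bound q hq) as [Cq [hCq Hq]].
  destruct (rd_bound r hr) as [Cr [hCr Hr]].
  pose proof (qr_bound q r Cq Cr hCq hCr Hq Hr) as Hqr.
  set (C0 := (Cq + Cr + 3 * Cq * Cr)%R).
  assert (hC0 : (0 <= C0)%R) by (unfold C0; pos).
  assert (Hb : forall x : R, (0 <= x)%R -> forall n, (x * mu n <= C0 * mu n)%R -> True) by auto.
  assert (hmu : forall n, (0 <= mu n)%R) by (intros; apply Rlt_le, mu_pos).
  assert (B0 : forall n, (Cmod (RtoC 0) <= C0 * mu n)%R).
  { intros n. rewrite Cmod_0. pose proof (hmu n). unfold C0. pos. }
  assert (Bq : forall n, (Cmod (q n) <= C0 * mu n)%R).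
  { intros n. eapply Rle_trans; [apply Hq|]. apply Rmult_le_compat_r; auto. unfold C0.
    assert (0 <= 3 * Cq * Cr)%R by pos. lra. }
  assert (Br : forall n, (Cmod (r n) <= C0 * mu n)%R).
  { intros n. eapply Rle_trans; [apply Hr|]. apply Rmult_le_compat_r; auto. unfold C0.
    assert (0 <= 3 * Cq * Cr)%R by pos. lra. }
  assert (Bqr : forall n m, (Cmod (q n * r m) <= C0 * mu n)%R).
  { intros n m. eapply Rle_trans; [apply Hqr|]. apply Rmult_le_compat_r; auto. unfold C0. lra. }
  destruct (gen_main (fun _ => 0) (fun n => - q n) (fun _ => 0) (fun n => 1 - q n * r n)
                     (fun _ => 1) (fun n => q n) (fun n => r n) (fun n => q n * r n) C0 hC0)
    as [v0 [v1 [L0 [L1 [Kf [Hv0 [Cv0 [Hv1 [Cv1 [HL0 [HL1 [hKf Hw]]]]]]]]]]]].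
  all: try (intros n; simpl; first [apply B0 | rewrite Cmod_opp; apply Bq | apply Bq | apply Br | apply Bqr
                                 | replace (1 - q n * r n - 1) with (- (q n * r n)) by ring; rewrite Cmod_opp; apply Bqr
                                 | replace (RtoC 1 - 1) with (RtoC 0) by ring; apply B0]).
  assert (EP : forall n, snd (v0 n) = (1 - q n * r n) * snd (v0 (n+1)%Z)).
  { intros n. rewrite (Hv0 n) at 1. unfold vadd, Mw, zero2; simpl. ring. }
  assert (E1 : forall n, fst (v0 n) = - q n * snd (v0 (n+1)%Z)).
  { intros n. rewrite (Hv0 n) at 1. unfold vadd, Mw, zero2; simpl. ring. }
  assert (E2 : forall n, snd (v1 n) = (1 - q n * r n) * snd (v1 (n+1)%Z) + r n * fst (v0 (n+1)%Z)
                                       + q n * r n * snd (v0 (n+1)%Z)).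
  { intros n. rewrite (Hv1 n) at 1. unfold vadd, Mw, Bm; simpl. ring. }
  destruct (prod_lemma (fun j => 1 - q j * r j) (fun n => snd (v0 n)) L0 C0 hC0 EP h1)
    as [HD [L0nz Pnz]].
  { intros n. replace (1 - q n * r n - 1) with (- (q n * r n)) by ring. rewrite Cmod_opp. apply Bqr. }
  { apply Cv0. }
  { auto. }
  set (c := fun n => snd (v1 n) / snd (v0 n)).
  assert (Ec : forall k, Sterm q r k = c k - c (k+1)%Z).
  { intros k. unfold c, Sterm. rewrite (E2 k), (E1 (k+1)%Z), (EP k), (EP (k+1)%Z).
    field. repeat split; auto. }
  exists L0, (L1 / L0). split; [auto|split].
  - unfold sumZ_is.
    eapply cv_nat_ext.
    { intros N. symmetry. unfold psumZ. rewrite (sumZ_ext _ _ Ec). fold (psumZ (fun k => c k - c (k+1)%Z) N).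
      apply psum_tele. }
    replace (L1 / L0) with (L1 / L0 - 0 / 1) by (field; auto).
    apply cv_nat_sub.
    + apply cv_nat_div; auto; [apply (cv_minf_nat (fun n => snd (v1 n)))|apply (cv_minf_nat (fun n => snd (v0 n)))]; auto.
    + apply cv_nat_div; [apply C1_nz| |]; [apply (cv_pinf_nat (fun n => snd (v1 n)))|apply (cv_pinf_nat (fun n => snd (v0 n)))]; [apply Cv1|apply Cv0].
  - exists (w0 L0 L1 Kf), (KT L0 L1 Kf). split; [apply w0_pos; auto|].
    intros z hz hzd.
    assert (znz : z <> 0) by (intros E; rewrite E, Cmod_0 in hz; lra).
    assert (w01 : (w0 L0 L1 Kf <= 1)%R) by apply Rmin_l.
    set (w := z * z).
    assert (wnz : w <> 0) by (apply Cmult_neq_0; auto).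
    assert (hwd : (Cmod w < w0 L0 L1 Kf)%R) by (apply Cmod_z_lt; auto).
    assert (hw1 : (Cmod w <= 1)%R) by lra.
    destruct (Hw w wnz hw1) as [[G [HG CG]] HU].
    assert (Hz4 : (Cmod z ^ 4 = Cmod w * Cmod w)%R) by (unfold w; rewrite Cmod_pow2; ring).
    assert (Ez2 : z ^ 2 = w) by (unfold w; simpl; ring).
    split.
    + destruct (HU G HG CG) as [LG [HLG HbG]].
      destruct (final_alg L0 L1 LG w Kf L0nz hKf (Rlt_le _ _ hwd) HbG) as [LGnz _].
      exists (/ LG). split; [apply Cinv_nz; auto|].
      exists (fun n => zpow z n * fst (G n)), (fun n => zpow z n * snd (G n)).
      split; [split; [|split]|].
      * intros n. rewrite (HG n) at 1 2. rewrite zpow_succ by auto. unfold vadd, Mw, zero2; simpl.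
        unfold w. split; field; auto.
      * eapply cv_pinf_ext; [|apply CG]. intros n. simpl. rewrite zpow_opp by auto. field. apply zpow_nz; auto.
      * eapply cv_pinf_ext; [|apply CG]. intros n. simpl. rewrite zpow_opp by auto. field. apply zpow_nz; auto.
      * rewrite Cinv_inv' by auto. eapply cv_minf_ext; [|apply HLG].
        intros n. simpl. rewrite zpow_opp by auto. field. apply zpow_nz; auto.
    + intros t [tnz [alpha [beta [[Hs [Ha Hb2]] Hm]]]].
      set (G' := fun n => (zpow z (- n) * alpha n, zpow z (- n) * beta n)).
      assert (HG' : solP (fun _ => 0) (fun n => - q n) (fun _ => 0) (fun n => 1 - q n * r n)
                     (fun _ => 1) (fun n => q n) (fun n => r n) (fun n => q n * r n) w zero2 G').
      { intros n. unfold G'. destruct (Hs n) as [Ea Eb]. rewrite Ea, Eb.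
        rewrite !zpow_opp by auto. rewrite zpow_succ by auto.
        unfold vadd, Mw, zero2; simpl. unfold w.
        assert (zpow z n <> 0) by (apply zpow_nz; auto).
        apply injective_projections; simpl; field; auto. }
      assert (CG' : cvP G' (RtoC 0, RtoC 1)) by (split; auto).
      destruct (HU G' HG' CG') as [LG [HLG HbG]].
      assert (EtL : / t = LG) by (eapply cv_minf_unique; [apply Hm|apply HLG]).
      destruct (final_alg L0 L1 LG w Kf L0nz hKf (Rlt_le _ _ hwd) HbG) as [LGnz Hfin].
      assert (Et : t = / LG) by (rewrite <- EtL; rewrite Cinv_inv'; auto).
      rewrite Et, Ez2, Hz4. auto.
Qed.

Definition Qterm (q r : Z -> C) (k : Z) : C :=
  r (k + 2)%Z * (q k - q (k + 1)%Z - q k * q (k + 1)%Z * r (k + 1)%Z)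
    / ((1 + q k * r (k + 1)%Z) * (1 + q (k + 1)%Z * r (k + 2)%Z)).

Theorem Tbar_part (q r : Z -> C) (hq : rapidly_decreasing q) (hr : rapidly_decreasing r)
  (h2 : forall n : Z, 1 + q n * r (n + 1)%Z <> 0) :
  exists Einf Qinf : C,
    prodZ_is (fun j => 1 + q j * r (j + 1)%Z) Einf /\
    sumZ_is (Qterm q r) Qinf /\
    (exists (M K : R), (0 < M)%R /\
      forall z : C, (M < Cmod z)%R ->
        (exists t, transTbar q r z t) /\
        forall t, transTbar q r z t ->
          (Cmod (t - / Einf * (1 - / z ^ 2 * Qinf)) <= K * / Cmod z ^ 4)%R).
Proof.
  destruct (rd_bound q hq) as [Cq [hCq Hq]].
  destruct (rd_bound r hr) as [Cr [hCr Hr]].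
  pose proof (qr_bound q r Cq Cr hCq hCr Hq Hr) as Hqr.
  set (C0 := (Cq + Cr + 3 * Cq * Cr)%R).
  assert (hC0 : (0 <= C0)%R) by (unfold C0; pos).
  assert (hmu : forall n, (0 <= mu n)%R) by (intros; apply Rlt_le, mu_pos).
  assert (B0 : forall n, (Cmod (RtoC 0) <= C0 * mu n)%R).
  { intros n. rewrite Cmod_0. pose proof (hmu n). unfold C0. pos. }
  assert (Bq : forall n, (Cmod (q n) <= C0 * mu n)%R).
  { intros n. eapply Rle_trans; [apply Hq|]. apply Rmult_le_compat_r; auto. unfold C0.
    assert (0 <= 3 * Cq * Cr)%R by pos. lra. }
  assert (Br : forall n, (Cmod (r n) <= C0 * mu n)%R).
  { intros n. eapply Rle_trans; [apply Hr|]. apply Rmult_le_compat_r; auto. unfold C0.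
    assert (0 <= 3 * Cq * Cr)%R by pos. lra. }
  assert (Bqr : forall n m, (Cmod (q n * r m) <= C0 * mu n)%R).
  { intros n m. eapply Rle_trans; [apply Hqr|]. apply Rmult_le_compat_r; auto. unfold C0. lra. }
  destruct (gen_main (fun n => q n * r n) (fun n => r n) (fun n => q n) (fun _ => 1)
                     (fun n => 1 - q n * r n) (fun _ => 0) (fun n => - q n) (fun _ => 0) C0 hC0)
    as [v0 [v1 [L0 [L1 [Kf [Hv0 [Cv0 [Hv1 [Cv1 [HL0 [HL1 [hKf Hw]]]]]]]]]]]].
  all: try (intros n; simpl; first [apply B0 | rewrite Cmod_opp; apply Bq | apply Bq | apply Br | apply Bqr
                                 | replace (1 - q n * r n - 1) with (- (q n * r n)) by ring; rewrite Cmod_opp; apply Bqr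
                                 | replace (RtoC 1 - 1) with (RtoC 0) by ring; apply B0]).
  assert (F1 : forall n, fst (v0 n) = q n * r n * fst (v0 (n+1)%Z) + r n * snd (v0 (n+1)%Z)).
  { intros n. rewrite (Hv0 n) at 1. unfold vadd, Mw, zero2; simpl. ring. }
  assert (F2 : forall n, snd (v0 n) = q n * fst (v0 (n+1)%Z) + snd (v0 (n+1)%Z)).
  { intros n. rewrite (Hv0 n) at 1. unfold vadd, Mw, zero2; simpl. ring. }
  assert (R0 : forall n, fst (v0 n) = r n * snd (v0 n)).
  { intros n. rewrite (F1 n), (F2 n). ring. }
  assert (EP : forall n, snd (v0 n) = (1 + q n * r (n+1)%Z) * snd (v0 (n+1)%Z)).
  { intros n. rewrite (F2 n), (R0 (n+1)%Z). ring. }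
  assert (G1 : forall n, fst (v1 n) = q n * r n * fst (v1 (n+1)%Z) + r n * snd (v1 (n+1)%Z)
                                       + (1 - q n * r n) * fst (v0 (n+1)%Z)).
  { intros n. rewrite (Hv1 n) at 1. unfold vadd, Mw, Bm; simpl. ring. }
  assert (G2 : forall n, snd (v1 n) = q n * fst (v1 (n+1)%Z) + snd (v1 (n+1)%Z) - q n * fst (v0 (n+1)%Z)).
  { intros n. rewrite (Hv1 n) at 1. unfold vadd, Mw, Bm; simpl. ring. }
  assert (R1 : forall n, fst (v1 n) = r n * snd (v1 n) + fst (v0 (n+1)%Z)).
  { intros n. rewrite (G1 n), (G2 n). ring. }
  destruct (prod_lemma (fun j => 1 + q j * r (j + 1)%Z) (fun n => snd (v0 n)) L0 C0 hC0 EP h2)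
    as [HE [L0nz Pnz]].
  { intros n. replace (1 + q n * r (n+1)%Z - 1) with (q n * r (n+1)%Z) by ring. apply Bqr. }
  { apply Cv0. }
  { auto. }
  set (c := fun n => snd (v1 n) / snd (v0 n)).
  set (g := fun n => / (1 + q n * r (n + 1)%Z)).
  assert (Ec : forall k, Qterm q r k = (c k - c (k+1)%Z) - (g k - g (k+1)%Z)).
  { intros k. unfold c, g, Qterm. rewrite (G2 k), (R1 (k+1)%Z), (R0 (k+1+1)%Z), (R0 (k+1)%Z), (EP k), (EP (k+1)%Z).
    replace (k + 1 + 1)%Z with (k + 2)%Z by lia.
    pose proof (h2 (k+1)%Z) as h2'. replace (k + 1 + 1)%Z with (k + 2)%Z in h2' by lia.
    pose proof (Pnz (k+2)%Z).
    field. repeat split; auto. }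
  destruct (small_cv (fun n => q n * r (n+1)%Z) C0 (fun n => Bqr n (n+1)%Z)) as [xp xm].
  assert (g1 : forall u : nat -> C, cv_nat u 0 -> cv_nat (fun N => / (1 + u N)) 1).
  { intros u hu.
    assert (h1u : cv_nat (fun N => 1 + u N) 1).
    { pose proof (cv_nat_lin (fun _ => RtoC 1) u 1 0 1 (cv_nat_const 1) hu) as hh.
      replace (RtoC 1 + 1 * 0) with (RtoC 1) in hh by ring.
      eapply cv_nat_ext; [|apply hh]. intros; simpl; ring. }
    pose proof (cv_nat_inv _ _ C1_nz h1u) as hh.
    replace (/ RtoC 1) with (RtoC 1) in hh by (field; apply C1_nz). exact hh. }
  exists L0, (L1 / L0). split; [auto|split].
  - unfold sumZ_is.
    eapply cv_nat_ext.
    { intros N. symmetry. unfold psumZ. rewrite (sumZ_ext _ _ Ec). apply psum_tele2. }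
    replace (L1 / L0) with ((L1 / L0 - 0 / 1) - (1 - 1)) by (field; auto).
    apply cv_nat_sub; apply cv_nat_sub.
    + apply cv_nat_div; auto; [apply (cv_minf_nat (fun n => snd (v1 n)))|apply (cv_minf_nat (fun n => snd (v0 n)))]; auto.
    + apply cv_nat_div; [apply C1_nz| |]; [apply (cv_pinf_nat (fun n => snd (v1 n)))|apply (cv_pinf_nat (fun n => snd (v0 n)))]; [apply Cv1|apply Cv0].
    + apply (g1 (fun N => q (- Z.of_nat N)%Z * r (- Z.of_nat N + 1)%Z)). auto.
    + apply (g1 (fun N => q (Z.of_nat N + 1)%Z * r (Z.of_nat N + 1 + 1)%Z)). auto.
  - pose proof (w0_pos L0 L1 Kf L0nz hKf) as hw0.
    assert (w01 : (w0 L0 L1 Kf <= 1)%R) by apply Rmin_l.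
    exists (/ w0 L0 L1 Kf)%R, (KT L0 L1 Kf). split; [apply Rinv_0_lt_compat; auto|].
    intros z hz.
    assert (hM1 : (1 <= / w0 L0 L1 Kf)%R) by (rewrite <- Rinv_1; apply Rinv_le_contravar; lra).
    assert (znz : z <> 0) by (intros E; rewrite E, Cmod_0 in hz; lra).
    assert (hzpos : (0 < Cmod z)%R) by lra.
    set (w := / (z * z)).
    assert (zznz : z * z <> 0) by (apply Cmult_neq_0; auto).
    assert (wnz : w <> 0) by (apply Cinv_nz; auto).
    assert (Cw : Cmod w = (/ (Cmod z * Cmod z))%R) by (unfold w; rewrite Cmod_inv, Cmod_pow2; auto).
    assert (hwd : (Cmod w < w0 L0 L1 Kf)%R).
    { rewrite Cw. assert (/ w0 L0 L1 Kf < Cmod z * Cmod z)%R by nra.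
      apply Rinv_lt_contravar in H; [|apply Rmult_lt_0_compat; [apply Rinv_0_lt_compat|]; nra].
      rewrite Rinv_inv in H. auto. }
    assert (hw1 : (Cmod w <= 1)%R) by lra.
    destruct (Hw w wnz hw1) as [[G [HG CG]] HU].
    assert (Hz4 : (/ Cmod z ^ 4 = Cmod w * Cmod w)%R) by (rewrite Cw; field; lra).
    assert (Ez2 : / z ^ 2 = w) by (unfold w; simpl; f_equal; ring).
    split.
    + destruct (HU G HG CG) as [LG [HLG HbG]].
      destruct (final_alg L0 L1 LG w Kf L0nz hKf (Rlt_le _ _ hwd) HbG) as [LGnz _].
      exists (/ LG). split; [apply Cinv_nz; auto|].
      exists (fun n => zpow z (- n) * snd (G n)), (fun n => zpow z (- n) * fst (G n)).
      split; [split; [|split]|].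
      * intros n. rewrite (HG n) at 1 2. replace (- (n + 1))%Z with (- n - 1)%Z by lia.
        assert (E : zpow z (- n) = z * zpow z (- n - 1)).
        { rewrite <- zpow_succ by auto. f_equal. lia. }
        rewrite E. unfold vadd, Mw, zero2; simpl. unfold w.
        assert (zpow z (- n - 1) <> 0) by (apply zpow_nz; auto).
        split; field; auto.
      * eapply cv_pinf_ext; [|apply CG]. intros n. simpl. rewrite zpow_opp by auto. field. apply zpow_nz; auto.
      * eapply cv_pinf_ext; [|apply CG]. intros n. simpl. rewrite zpow_opp by auto. field. apply zpow_nz; auto.
      * rewrite Cinv_inv' by auto. eapply cv_minf_ext; [|apply HLG].
        intros n. simpl. rewrite zpow_opp by auto. field. apply zpow_nz; auto.
    + intros t [tnz [alpha [beta [[Hs [Ha Hb2]] Hm]]]].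
      set (G' := fun n => (zpow z n * beta n, zpow z n * alpha n)).
      assert (HG' : solP (fun n => q n * r n) (fun n => r n) (fun n => q n) (fun _ => 1)
                     (fun n => 1 - q n * r n) (fun _ => 0) (fun n => - q n) (fun _ => 0) w zero2 G').
      { intros n. unfold G'. destruct (Hs n) as [Ea Eb]. rewrite Ea, Eb.
        rewrite zpow_succ by auto.
        unfold vadd, Mw, zero2; simpl. unfold w.
        assert (zpow z n <> 0) by (apply zpow_nz; auto).
        apply injective_projections; simpl; field; auto. }
      assert (CG' : cvP G' (RtoC 0, RtoC 1)) by (split; auto).
      destruct (HU G' HG' CG') as [LG [HLG HbG]].
      assert (EtL : / t = LG) by (eapply cv_minf_unique; [apply Hm|apply HLG]).
      destruct (final_alg L0 L1 LG w Kf L0nz hKf (Rlt_le _ _ hwd) HbG) as [LGnz Hfin].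
      assert (Et : t = / LG) by (rewrite <- EtL; rewrite Cinv_inv'; auto).
      rewrite Et, Ez2, Hz4. auto.
Qed.

Theorem proposition2p7 (q r : Z -> C)
  (hq : rapidly_decreasing q) (hr : rapidly_decreasing r)
  (h1 : forall n : Z, 1 - q n * r n <> 0)
  (h2 : forall n : Z, 1 + q n * r (n + 1)%Z <> 0) :
  exists Dinf Einf Sinf Qinf : C,
    prodZ_is (fun j => 1 - q j * r j) Dinf /\
    prodZ_is (fun j => 1 + q j * r (j + 1)%Z) Einf /\
    sumZ_is (fun k => r k * (q k - q (k + 1)%Z - q k * q (k + 1)%Z * r (k + 1)%Z)
                      / ((1 - q k * r k) * (1 - q (k + 1)%Z * r (k + 1)%Z))) Sinf /\
    sumZ_is (fun k => r (k + 2)%Z * (q k - q (k + 1)%Z - q k * q (k + 1)%Z * r (k + 1)%Z)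
                      / ((1 + q k * r (k + 1)%Z) * (1 + q (k + 1)%Z * r (k + 2)%Z))) Qinf /\
    (* T = (1/D_oo) [1 - z^2 S_oo + O(z^4)] as z -> 0 *)
    (exists (delta K : R), (0 < delta)%R /\
      forall z : C, (0 < Cmod z)%R -> (Cmod z < delta)%R ->
        (exists t, transT q r z t) /\
        forall t, transT q r z t ->
          (Cmod (t - / Dinf * (1 - z ^ 2 * Sinf)) <= K * Cmod z ^ 4)%R) /\
    (* Tbar = (1/E_oo) [1 - z^{-2} Q_oo + O(z^{-4})] as z -> oo *)
    (exists (M K : R), (0 < M)%R /\
      forall z : C, (M < Cmod z)%R ->
        (exists t, transTbar q r z t) /\
        forall t, transTbar q r z t ->
          (Cmod (t - / Einf * (1 - / z ^ 2 * Qinf)) <= K * / Cmod z ^ 4)%R).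
Proof.
  destruct (T_part q r hq hr h1) as [Dinf [Sinf [HD [HS HT]]]].
  destruct (Tbar_part q r hq hr h2) as [Einf [Qinf [HE [HQ HTb]]]].
  exists Dinf, Einf, Sinf, Qinf. repeat split; auto.
Qed.
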